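(* Let $D\subset\mathbb{R}^2$ be a bounded domain invariant under rotation by $2\pi/N$ about the origin, for some even $N\ge4$. Let $T_\pm$ be invertible linear maps of $\mathbb{R}^2$ agreeing on the $x_1$-axis, with $T_\pm(\mathbb{R}^2_\pm)=\mathbb{R}^2_\pm$ and $\det T_+=\det T_-$, and let $T=T_+$ on $\{x_2\ge0\}$, $T=T_-$ on $\{x_2\le0\}$. Then \[ \frac14\big(\|T_+^{-1}\|_{HS}^2+\|T_-^{-1}\|_{HS}^2\big)=\frac{I_0(TD)}{A(TD)^3}\Big/\frac{I_0(D)}{A(D)^3}. \]
   Context: $\mathbb{R}^2_\pm=\{\pm x_2>0\}$. $A$ is area and $I_0(E)=\int_E|x|^2dx$ the moment of inertia about the origin. $\|M\|_{HS}=(\operatorname{tr}MM^\dagger)^{1/2}$. *)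

(* Defs.v *)
From Stdlib Require Import Reals Lra ClassicalEpsilon.
Open Scope R_scope.

Definition pt2 := (R * R)%type.
Definition region := pt2 -> Prop.

Definition nrm2 (p : pt2) : R := fst p ^ 2 + snd p ^ 2.

Definition is_open2 (E : region) : Prop :=
  forall p, E p -> exists eps, 0 < eps /\
    forall q, (fst q - fst p) ^ 2 + (snd q - snd p) ^ 2 < eps ^ 2 -> E q.

Definition is_connected2 (E : region) : Prop :=
  ~ exists U V : region, is_open2 U /\ is_open2 V /\
      (exists p, E p /\ U p) /\ (exists p, E p /\ V p) /\
      (forall p, E p -> U p \/ V p) /\
      (forall p, E p -> U p -> V p -> False).

Definition is_domain (E : region) : Prop :=
  (exists p, E p) /\ is_open2 E /\ is_connected2 E.

Definition is_bounded2 (E : region) : Prop :=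
  exists M, forall p, E p -> Rabs (fst p) <= M /\ Rabs (snd p) <= M.

Definition is_glb (S : R -> Prop) (m : R) : Prop :=
  (forall s, S s -> m <= s) /\ (forall m', (forall s, S s -> m' <= s) -> m' <= m).

Definition Rinf (S : R -> Prop) : R := epsilon (inhabits 0) (is_glb S).

Definition box2 := ((R * R) * (R * R))%type.
Definition in_box2 (c : box2) (p : pt2) : Prop :=
  fst (fst c) < fst p < snd (fst c) /\ fst (snd c) < snd p < snd (snd c).
Definition vol_box2 (c : box2) : R :=
  Rmax 0 (snd (fst c) - fst (fst c)) * Rmax 0 (snd (snd c) - fst (snd c)).

Definition cover_sums2 (E : region) (s : R) : Prop :=
  exists c : nat -> box2,
    (forall p, E p -> exists n, in_box2 (c n) p) /\
    infinite_sum (fun n => vol_box2 (c n)) s.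

Definition area (E : region) : R := Rinf (cover_sums2 E).

Definition pt3 := (R * R * R)%type.
Definition box3 := ((R * R) * (R * R) * (R * R))%type.
Definition in_box3 (c : box3) (p : pt3) : Prop :=
  let '(i1, i2, i3) := c in let '(x, y, z) := p in
  fst i1 < x < snd i1 /\ fst i2 < y < snd i2 /\ fst i3 < z < snd i3.
Definition vol_box3 (c : box3) : R :=
  let '(i1, i2, i3) := c in
  Rmax 0 (snd i1 - fst i1) * Rmax 0 (snd i2 - fst i2) * Rmax 0 (snd i3 - fst i3).

Definition cover_sums3 (F : pt3 -> Prop) (s : R) : Prop :=
  exists c : nat -> box3,
    (forall p, F p -> exists n, in_box3 (c n) p) /\
    infinite_sum (fun n => vol_box3 (c n)) s.

Definition volume3 (F : pt3 -> Prop) : R := Rinf (cover_sums3 F).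

Definition subgraph_nrm2 (E : region) (p : pt3) : Prop :=
  let '(x, y, t) := p in E (x, y) /\ 0 < t < nrm2 (x, y).

(* moment of inertia I_0(E) = \int_E |x|^2 dx
   (integral of a nonnegative function = measure of its subgraph) *)
Definition moment0 (E : region) : R := volume3 (subgraph_nrm2 E).

Definition mat2 := (R * R * R * R)%type.
Definition mapply (M : mat2) (p : pt2) : pt2 :=
  let '(a, b, c, d) := M in (a * fst p + b * snd p, c * fst p + d * snd p).
Definition mdet (M : mat2) : R := let '(a, b, c, d) := M in a * d - b * c.
Definition minv (M : mat2) : mat2 :=
  let '(a, b, c, d) := M in
  (d / mdet M, - b / mdet M, - c / mdet M, a / mdet M).
Definition hs2 (M : mat2) : R :=
  let '(a, b, c, d) := M in a ^ 2 + b ^ 2 + c ^ 2 + d ^ 2.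

Definition rot (th : R) (p : pt2) : pt2 :=
  (cos th * fst p - sin th * snd p, sin th * fst p + cos th * snd p).

(* piecewise map: T+ on x2 >= 0, T- on x2 < 0 (they agree on x2 = 0) *)
Definition pw_map (Tp Tm : mat2) (p : pt2) : pt2 :=
  if Rle_dec 0 (snd p) then mapply Tp p else mapply Tm p.

Definition image (f : pt2 -> pt2) (E : region) : region :=
  fun q => exists p, E p /\ f p = q.

(* Main.v *)
Require Import Defs.
From Stdlib Require Import Reals Lra Lia Psatz List ClassicalEpsilon Classical FunctionalExtensionality PropExtensionality.
Open Scope R_scope.

Fixpoint sumN (f : nat -> R) (n : nat) : R :=
  match n with O => 0 | S n' => sumN f n' + f n' end.

Lemma sumN_f_R0 f n : sum_f_R0 f n = sumN f (S n).
Proof. induction n; simpl in *; [lra|]. rewrite IHn. simpl. lra. Qed.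

Lemma sumN_nn f n : (forall k, 0 <= f k) -> 0 <= sumN f n.
Proof. intros H; induction n; simpl; [lra|]. specialize (H n); lra. Qed.

Lemma sumN_mono f n m : (forall k, 0 <= f k) -> (n <= m)%nat -> sumN f n <= sumN f m.
Proof. intros H Hnm; induction Hnm; simpl; [lra|]. specialize (H m); lra. Qed.

Lemma sumN_le f g n : (forall k, (k < n)%nat -> f k <= g k) -> sumN f n <= sumN g n.
Proof. induction n; intros H; simpl; [lra|].
  assert (f n <= g n) by (apply H; lia). assert (sumN f n <= sumN g n) by (apply IHn; intros; apply H; lia). lra. Qed.

Lemma sumN_ext f g n : (forall k, (k < n)%nat -> f k = g k) -> sumN f n = sumN g n.
Proof. induction n; intros H; simpl; [lra|].
  rewrite (H n) by lia. rewrite IHn; [lra|]. intros; apply H; lia. Qed.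

Lemma sumN_plus f g n : sumN (fun k => f k + g k) n = sumN f n + sumN g n.
Proof. induction n; simpl; lra. Qed.

Lemma sumN_scal f c n : sumN (fun k => c * f k) n = c * sumN f n.
Proof. induction n; simpl; [lra|]. rewrite IHn; lra. Qed.

Lemma sumN_add f a b : sumN f (a + b) = sumN f a + sumN (fun r => f (a + r)%nat) b.
Proof. induction b; simpl. - rewrite Nat.add_0_r; lra. - rewrite Nat.add_succ_r; simpl. rewrite IHb; lra. Qed.

Lemma geom_sum eps n : sumN (fun i => eps / 2 ^ (S i)) n = eps - eps / 2 ^ n.
Proof. induction n; cbn [sumN]. - simpl; field. - rewrite IHn. simpl. field. apply pow_nonzero; lra. Qed.

Lemma geom_pos eps i : 0 < eps -> 0 < eps / 2 ^ i.
Proof. intros; apply Rdiv_lt_0_compat; auto. apply pow_lt; lra. Qed.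

Lemma geom_le eps n : 0 <= eps -> sumN (fun i => eps / 2 ^ (S i)) n <= eps.
Proof. intros; rewrite geom_sum. assert (0 <= eps / 2 ^ n).
  { apply Rmult_le_pos; auto. left; apply Rinv_0_lt_compat, pow_lt; lra. } lra. Qed.

Lemma lim_ge_partial f l n : (forall k, 0 <= f k) -> infinite_sum f l -> sumN f n <= l.
Proof.
  intros Hf Hl. destruct (Rle_dec (sumN f n) l) as [|H]; auto. exfalso.
  destruct (Hl (sumN f n - l)) as [N HN]; [lra|].
  specialize (HN (max N n) (Nat.le_max_l _ _)). rewrite sumN_f_R0 in HN.
  assert (sumN f n <= sumN f (S (max N n))) by (apply sumN_mono; auto; lia).
  unfold Rdist in HN. apply Rabs_def2 in HN. lra.
Qed.

Lemma lim_le_bound f l M : infinite_sum f l -> (forall n, sumN f n <= M) -> l <= M.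
Proof.
  intros Hl HM. destruct (Rle_dec l M) as [|H]; auto. exfalso.
  destruct (Hl (l - M)) as [N HN]; [lra|]. specialize (HN N (le_n _)).
  rewrite sumN_f_R0 in HN. specialize (HM (S N)). unfold Rdist in HN. apply Rabs_def2 in HN. lra.
Qed.

Lemma bounded_cv f M : (forall k, 0 <= f k) -> (forall n, sumN f n <= M) ->
  exists l, infinite_sum f l /\ l <= M.
Proof.
  intros Hf HM.
  destruct (growing_cv (sum_f_R0 f)) as [l Hl].
  - intro n. simpl. specialize (Hf (S n)). lra.
  - exists M. intros x [n ->]. rewrite sumN_f_R0. apply HM.
  - exists l. assert (infinite_sum f l) by exact Hl. split; auto.
    apply (lim_le_bound f); auto.
Qed.

Lemma infinite_sum_plus f g a b : infinite_sum f a -> infinite_sum g b ->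
  infinite_sum (fun n => f n + g n) (a + b).
Proof.
  intros Ha Hb eps He. destruct (Ha (eps/2)) as [N1 H1]; [lra|]. destruct (Hb (eps/2)) as [N2 H2]; [lra|].
  exists (max N1 N2). intros n Hn. specialize (H1 n ltac:(lia)). specialize (H2 n ltac:(lia)).
  rewrite sumN_f_R0 in *. rewrite sumN_plus. unfold Rdist in *.
  apply Rabs_def2 in H1; apply Rabs_def2 in H2. apply Rabs_def1; lra.
Qed.

Definition dnext (p : nat * nat) : nat * nat :=
  let (i, j) := p in match j with O => (O, S i) | S j' => (S i, j') end.

Fixpoint diag (k : nat) : nat * nat :=
  match k with O => (O, O) | S k' => dnext (diag k') end.

Fixpoint tri (s : nat) : nat := match s with O => O | S s' => (tri s' + S s')%nat end.

Lemma diag_tri s : forall r, (r <= s)%nat -> diag (tri s + r) = (r, s - r)%nat.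
Proof.
  induction s.
  - intros r Hr. assert (r = 0%nat) by lia. subst. reflexivity.
  - assert (H0 : diag (tri (S s)) = (0, S s)%nat).
    { change (tri (S s)) with (tri s + S s)%nat. rewrite Nat.add_succ_r.
      change (diag (S (tri s + s))) with (dnext (diag (tri s + s))).
      rewrite (IHs s (le_n _)). rewrite Nat.sub_diag. reflexivity. }
    induction r; intros Hr.
    + rewrite Nat.add_0_r. rewrite H0. f_equal.
    + rewrite Nat.add_succ_r.
      change (diag (S (tri (S s) + r))) with (dnext (diag (tri (S s) + r))).
      rewrite IHr by lia. unfold dnext.
      destruct (S s - r)%nat eqn:E; [lia|]. f_equal; lia.
Qed.

Lemma diag_surj i j : diag (tri (i + j) + i) = (i, j).
Proof. rewrite diag_tri by lia. f_equal; lia. Qed.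

Lemma tri_ge s : (s <= tri s)%nat.
Proof. induction s; simpl; lia. Qed.

Lemma diag_sum (F : nat -> nat -> R) n :
  sumN (fun k => F (fst (diag k)) (snd (diag k))) (tri n) =
  sumN (fun i => sumN (fun j => F i j) (n - i)) n.
Proof.
  induction n as [|n IH]; [reflexivity|].
  change (tri (S n)) with (tri n + S n)%nat. rewrite sumN_add, IH.
  rewrite (sumN_ext (fun r => F (fst (diag (tri n + r))) (snd (diag (tri n + r))))
             (fun r => F r (n - r)%nat)).
  2:{ intros k Hk. rewrite diag_tri by lia. reflexivity. }
  cbn [sumN]. replace (n - n)%nat with O by lia. replace (S n - n)%nat with 1%nat by lia. cbn [sumN].
  rewrite (sumN_ext (fun i => sumN (fun j => F i j) (S n - i)) (fun i => sumN (fun j => F i j) (n - i) + F i (n - i)%nat)).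
  2:{ intros k Hk. replace (S n - k)%nat with (S (n - k)) by lia. reflexivity. }
  rewrite sumN_plus. lra.
Qed.

Lemma abs_le_inv x y : Rabs x <= y -> - y <= x <= y.
Proof. unfold Rabs; destruct (Rcase_abs x); intros; lra. Qed.
Lemma abs_le x y : - y <= x <= y -> Rabs x <= y.
Proof. unfold Rabs; destruct (Rcase_abs x); intros; lra. Qed.
Lemma abs_lt_inv x y : Rabs x < y -> - y < x < y.
Proof. unfold Rabs; destruct (Rcase_abs x); intros; lra. Qed.
Lemma abs_lt x y : - y < x < y -> Rabs x < y.
Proof. unfold Rabs; destruct (Rcase_abs x); intros; lra. Qed.

Definition lsum {A} (f : A -> R) (l : list A) : R := fold_right (fun x acc => f x + acc) 0 l.

Lemma lsum_nn {A} (f : A -> R) l : (forall x, 0 <= f x) -> 0 <= lsum f l.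
Proof. intros H; induction l; simpl; [lra|]. specialize (H a); lra. Qed.

Lemma lsum_app {A} (f : A -> R) l1 l2 : lsum f (l1 ++ l2) = lsum f l1 + lsum f l2.
Proof. induction l1; simpl; lra. Qed.

Lemma lsum_filter2 {A} (f : A -> R) (p q : A -> bool) l : (forall x, 0 <= f x) ->
  (forall x, In x l -> p x = true -> q x = true -> False) ->
  lsum f (filter p l) + lsum f (filter q l) <= lsum f l.
Proof.
  intros Hf; induction l as [|x l IH]; intros Hd; simpl; [lra|].
  assert (IH' := IH (fun y Hy => Hd y (or_intror Hy))). specialize (Hf x).
  destruct (p x) eqn:Ep, (q x) eqn:Eq; simpl.
  - exfalso; apply (Hd x); simpl; auto.
  - lra. - lra.
  - lra.
Qed.

Lemma pred_ext {T} (E F : T -> Prop) : (forall p, E p <-> F p) -> E = F.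
Proof. intros H. apply functional_extensionality; intros p. apply propositional_extensionality; auto. Qed.

Lemma sumN_shift f n : sumN f (S n) = f O + sumN (fun k => f (S k)) n.
Proof. induction n; simpl in *; [lra|]. rewrite IHn. lra. Qed.

Definition img {T} (F : T -> T) (Y : T -> Prop) : T -> Prop := fun q => exists p, Y p /\ F p = q.

Section OM.
Context {P Bx : Type} (inb : Bx -> P -> Prop) (vol : Bx -> R).
Hypothesis vol_nn : forall b, 0 <= vol b.
Context (e0 : Bx).
Hypothesis e0_empty : forall p, ~ inb e0 p.
Hypothesis e0_vol : vol e0 = 0.

Definition cs (E : P -> Prop) (s : R) : Prop :=
  exists c : nat -> Bx, (forall p, E p -> exists n, inb (c n) p) /\
    infinite_sum (fun n => vol (c n)) s.
Definition mu E := Rinf (cs E).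
Definition fin E := exists s, cs E s.

Lemma cs_nn E s : cs E s -> 0 <= s.
Proof. intros [c [_ Hc]]. apply (lim_ge_partial _ _ O) in Hc; simpl in Hc; auto. Qed.

Lemma mu_glb E : fin E -> is_glb (cs E) (mu E).
Proof.
  intros [s0 Hs0]. unfold mu, Rinf. apply epsilon_spec.
  set (S' := fun x => cs E (-x)).
  destruct (completeness S') as [m [Hub Hlub]].
  - exists 0. intros x Hx. apply cs_nn in Hx. lra.
  - exists (-s0). unfold S'. rewrite Ropp_involutive. auto.
  - exists (-m). split.
    + intros s Hs. assert (S' (-s)) as H by (unfold S'; rewrite Ropp_involutive; auto).
      specialize (Hub _ H). lra.
    + intros m' Hm'. assert (is_upper_bound S' (-m')) as H.
      { intros x Hx. specialize (Hm' _ Hx). lra. }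
      specialize (Hlub _ H). lra.
Qed.

Lemma mu_le E s : cs E s -> mu E <= s.
Proof. intros H. apply (proj1 (mu_glb E (ex_intro _ s H))); auto. Qed.

Lemma mu_ge E m : fin E -> (forall s, cs E s -> m <= s) -> m <= mu E.
Proof. intros H Hm. apply (proj2 (mu_glb E H)); auto. Qed.

Lemma mu_nn E : fin E -> 0 <= mu E.
Proof. intros H. apply mu_ge; auto. apply cs_nn. Qed.

Lemma mu_approx E eps : fin E -> 0 < eps -> exists s, cs E s /\ s < mu E + eps.
Proof.
  intros H He. apply NNPP; intros Hn.
  assert (mu E + eps <= mu E); [|lra].
  apply mu_ge; auto. intros s Hs. apply Rnot_lt_le. intros Hl; apply Hn; eauto.
Qed.

Lemma cover_bound E c M : (forall p, E p -> exists n, inb (c n) p) ->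
  (forall n, sumN (fun k => vol (c k)) n <= M) -> fin E /\ mu E <= M.
Proof.
  intros Hc HM. destruct (bounded_cv (fun k => vol (c k)) M) as [l [Hl HlM]]; auto.
  assert (cs E l) by (exists c; auto). split; [exists l; auto|].
  apply mu_le in H; lra.
Qed.

Lemma mu_mono E F : (forall p, E p -> F p) -> fin F -> fin E /\ mu E <= mu F.
Proof.
  intros HEF HF. assert (Hc : forall s, cs F s -> cs E s).
  { intros s [c [Hc Hs]]. exists c; split; auto. }
  destruct HF as [s Hs]. assert (fin E) by (exists s; auto). split; auto.
  apply mu_ge; [exists s; auto|]. intros s' Hs'. apply mu_le; auto.
Qed.

Lemma mu_ext E F : (forall p, E p <-> F p) -> mu E = mu F.
Proof. intros H; rewrite (pred_ext E F H); auto. Qed.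

Lemma fin_ext E F : (forall p, E p <-> F p) -> fin E -> fin F.
Proof. intros H; rewrite (pred_ext E F H); auto. Qed.

Lemma subadd (E : P -> Prop) (Es : nat -> P -> Prop) M :
  (forall n, fin (Es n)) -> (forall p, E p -> exists n, Es n p) ->
  (forall n, sumN (fun k => mu (Es k)) n <= M) -> fin E /\ mu E <= M.
Proof.
  intros Hf Hcov HM.
  assert (main : forall eps, 0 < eps -> fin E /\ mu E <= M + eps).
  { intros eps He.
    assert (H : forall n, exists cs0 : (nat -> Bx) * R,
      (forall p, Es n p -> exists m, inb (fst cs0 m) p) /\
      infinite_sum (fun m => vol (fst cs0 m)) (snd cs0) /\ snd cs0 < mu (Es n) + eps / 2 ^ (S n)).
    { intros n. destruct (mu_approx (Es n) (eps / 2 ^ (S n))) as [s [[c [H1 H2]] H3]]; auto.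
      apply geom_pos; auto. exists (c, s); simpl; auto. }
    set (pick := fun n => proj1_sig (constructive_indefinite_description _ (H n))).
    assert (Hp : forall n, (forall p, Es n p -> exists m, inb (fst (pick n) m) p) /\
      infinite_sum (fun m => vol (fst (pick n) m)) (snd (pick n)) /\ snd (pick n) < mu (Es n) + eps / 2 ^ (S n)).
    { intros n. unfold pick. apply (proj2_sig (constructive_indefinite_description _ (H n))). }
    set (d := fun k => fst (pick (fst (diag k))) (snd (diag k))).
    apply (cover_bound E d).
    - intros p Ep. destruct (Hcov p Ep) as [n Hn]. destruct (proj1 (Hp n) p Hn) as [m Hm].
      exists (tri (n + m) + n)%nat. unfold d. rewrite diag_surj. simpl. auto.
    - intros K. apply Rle_trans with (sumN (fun k => vol (d k)) (tri K)).
      { apply sumN_mono; auto. apply tri_ge. }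
      unfold d. rewrite (diag_sum (fun i j => vol (fst (pick i) j))).
      apply Rle_trans with (sumN (fun i => mu (Es i) + eps / 2 ^ (S i)) K).
      + apply sumN_le. intros i Hi. destruct (Hp i) as [_ [Hs Hlt]].
        apply (lim_ge_partial _ _ (K - i)) in Hs; auto. lra.
      + rewrite sumN_plus. specialize (HM K). assert (sumN (fun i => eps / 2 ^ S i) K <= eps) by (apply geom_le; lra). lra. }
  split; [apply (main 1); lra|]. apply le_epsilon. intros eps He. apply main; auto.
Qed.

Lemma empty_mu : fin (fun _ => False) /\ mu (fun _ => False) <= 0.
Proof. apply (cover_bound _ (fun _ => e0)). - intros p []. - intros n. induction n; simpl; lra. Qed.

Lemma subadd2 E A B : fin A -> fin B -> (forall p, E p -> A p \/ B p) -> fin E /\ mu E <= mu A + mu B.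
Proof.
  intros HA HB HE. set (Es := fun n => match n with O => A | 1%nat => B | _ => fun _ => False end).
  apply (subadd E Es).
  - intros [|[|n]]; simpl; auto. apply empty_mu.
  - intros p Ep. destruct (HE p Ep); [exists O|exists 1%nat]; simpl; auto.
  - assert (forall n, (2 <= n)%nat -> mu (Es n) = 0).
    { intros [|[|n]] Hn; try lia. simpl. pose proof empty_mu as [H1 H2]. pose proof (mu_nn _ H1). lra. }
    assert (HA0 := mu_nn _ HA). assert (HB0 := mu_nn _ HB).
    assert (forall n, sumN (fun k => mu (Es k)) (S (S n)) = mu A + mu B).
    { induction n. - simpl. lra. - change (sumN (fun k => mu (Es k)) (S (S (S n)))) with
        (sumN (fun k => mu (Es k)) (S (S n)) + mu (Es (S (S n)))). rewrite IHn, H by lia. lra. }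
    intros [|[|n]]; [simpl; lra|simpl; lra|]. rewrite H0; lra.
Qed.

Lemma list_cover E l : (forall p, E p -> exists b, In b l /\ inb b p) -> fin E /\ mu E <= lsum vol l.
Proof.
  intros H. apply (cover_bound E (fun n => nth n l e0)).
  - intros p Ep. destruct (H p Ep) as [b [Hb Hp]]. destruct (In_nth l b e0 Hb) as [n [_ Hn]].
    exists n; rewrite Hn; auto.
  - clear H. induction l as [|x l IH]; intros n.
    + induction n; cbn [sumN]; [simpl; lra|]. replace (nth n nil e0) with e0 by (destruct n; reflexivity). rewrite e0_vol; lra.
    + destruct n; [simpl; apply Rplus_le_le_0_compat; [apply vol_nn|apply lsum_nn; auto]|].
      rewrite sumN_shift. simpl. specialize (IH n). lra.
Qed.

Lemma box_cover E b : (forall p, E p -> inb b p) -> fin E /\ mu E <= vol b.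
Proof. intros H. destruct (list_cover E (b :: nil)) as [H1 H2].
  - intros p Hp; exists b; simpl; auto.
  - simpl in H2. split; auto; lra. Qed.

Lemma image_bound F Y c : 0 <= c ->
  (forall b eps, 0 < eps -> exists l, (forall p, inb b p -> Y p -> exists b', In b' l /\ inb b' (F p)) /\
     lsum vol l <= c * vol b + eps) ->
  fin Y -> fin (img F Y) /\ mu (img F Y) <= c * mu Y.
Proof.
  intros Hc0 Hb HY.
  assert (main : forall eps, 0 < eps -> fin (img F Y) /\ mu (img F Y) <= c * mu Y + (c + 1) * eps).
  { intros eps He. destruct (mu_approx Y eps HY He) as [s [[cv [Hcv Hs]] Hslt]].
    set (Es := fun n q => exists p, inb (cv n) p /\ Y p /\ F p = q).
    assert (HEs : forall n, fin (Es n) /\ mu (Es n) <= c * vol (cv n) + eps / 2 ^ (S n)).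
    { intros n. destruct (Hb (cv n) (eps / 2 ^ (S n))) as [l [Hl1 Hl2]]. apply geom_pos; auto.
      destruct (list_cover (Es n) l) as [H1 H2].
      - intros q [p [Hp1 [Hp2 <-]]]. auto.
      - split; auto; lra. }
    apply (subadd _ Es).
    - intros n; apply HEs.
    - intros q [p [Yp <-]]. destruct (Hcv p Yp) as [n Hn]. exists n. exists p; auto.
    - intros n. apply Rle_trans with (sumN (fun k => c * vol (cv k) + eps / 2 ^ (S k)) n).
      + apply sumN_le. intros k _. apply HEs.
      + rewrite sumN_plus, sumN_scal. pose proof (lim_ge_partial _ _ n (fun k => vol_nn (cv k)) Hs).
        pose proof (geom_le eps n ltac:(lra)).
        assert (c * sumN (fun k => vol (cv k)) n <= c * (mu Y + eps)) by (apply Rmult_le_compat_l; lra).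
        lra. }
  split; [apply (main 1); lra|]. apply le_epsilon. intros eps He.
  destruct (main (eps / (c + 1))) as [_ H]. apply Rdiv_lt_0_compat; lra.
  replace ((c + 1) * (eps / (c + 1))) with eps in H by (field; lra). lra.
Qed.

Lemma separation A B (close : P -> P -> Prop) :
  (forall b eps, 0 < eps -> exists l, (forall p, inb b p -> exists b', In b' l /\ inb b' p) /\
      lsum vol l <= vol b + eps /\ (forall b', In b' l -> forall p q, inb b' p -> inb b' q -> close p q)) ->
  (forall p q, A p -> B q -> ~ close p q) ->
  fin (fun p => A p \/ B p) ->
  fin A /\ fin B /\ mu A + mu B <= mu (fun p => A p \/ B p).
Proof.
  intros Href Hsep HU.
  assert (HA : fin A) by (apply (mu_mono A (fun p => A p \/ B p)); auto).
  assert (HB : fin B) by (apply (mu_mono B (fun p => A p \/ B p)); auto).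
  split; auto; split; auto.
  assert (main : forall eps, 0 < eps -> mu A + mu B <= mu (fun p => A p \/ B p) + 2 * eps).
  { intros eps He.
  destruct (mu_approx _ eps HU He) as [s [[c [Hc Hs]] Hslt]].
  set (EA := fun n p => A p /\ inb (c n) p). set (EB := fun n p => B p /\ inb (c n) p).
  assert (Hn : forall n, fin (EA n) /\ fin (EB n) /\ mu (EA n) + mu (EB n) <= vol (c n) + eps / 2 ^ (S n)).
  { intros n. destruct (Href (c n) (eps / 2 ^ (S n))) as [l [Hl1 [Hl2 Hl3]]]; [apply geom_pos; lra|].
    set (mA := fun b => if excluded_middle_informative (exists p, inb b p /\ A p) then true else false).
    set (mB := fun b => if excluded_middle_informative (exists p, inb b p /\ B p) then true else false).
    destruct (list_cover (EA n) (filter mA l)) as [HA1 HA2].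
    { intros p [Ap Hp]. destruct (Hl1 p Hp) as [b' [Hb' Hpb']]. exists b'; split; auto.
      apply filter_In; split; auto. unfold mA. destruct (excluded_middle_informative _) as [_|Hn]; auto.
      exfalso; apply Hn; eauto. }
    destruct (list_cover (EB n) (filter mB l)) as [HB1 HB2].
    { intros p [Bp Hp]. destruct (Hl1 p Hp) as [b' [Hb' Hpb']]. exists b'; split; auto.
      apply filter_In; split; auto. unfold mB. destruct (excluded_middle_informative _) as [_|Hn]; auto.
      exfalso; apply Hn; eauto. }
    assert (Hf := lsum_filter2 vol mA mB l vol_nn).
    assert (lsum vol (filter mA l) + lsum vol (filter mB l) <= lsum vol l).
    { apply Hf. intros x Hx HmA HmB. unfold mA in HmA. unfold mB in HmB.
      destruct (excluded_middle_informative (exists p, inb x p /\ A p)) as [[p [Hp Ap]]|]; [|discriminate].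
      destruct (excluded_middle_informative (exists p, inb x p /\ B p)) as [[q [Hq Bq]]|]; [|discriminate].
      apply (Hsep p q Ap Bq). apply (Hl3 x Hx p q Hp Hq). }
    split; auto; split; auto; lra. }
  assert (Hsum : forall n, sumN (fun k => mu (EA k) + mu (EB k)) n <= s + eps).
  { intros n. apply Rle_trans with (sumN (fun k => vol (c k) + eps / 2 ^ (S k)) n).
    - apply sumN_le; intros k _; apply Hn.
    - rewrite sumN_plus. pose proof (lim_ge_partial _ _ n (fun k => vol_nn (c k)) Hs).
      pose proof (geom_le eps n ltac:(lra)). lra. }
  assert (HA0 : forall k, 0 <= mu (EA k)) by (intros k; apply mu_nn, Hn).
  assert (HB0 : forall k, 0 <= mu (EB k)) by (intros k; apply mu_nn, Hn).
  destruct (bounded_cv (fun k => mu (EA k)) (s + eps)) as [al [Hal _]]; auto.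
  { intros n. specialize (Hsum n). rewrite sumN_plus in Hsum. pose proof (sumN_nn _ n HB0). lra. }
  destruct (bounded_cv (fun k => mu (EB k)) (s + eps)) as [bl [Hbl _]]; auto.
  { intros n. specialize (Hsum n). rewrite sumN_plus in Hsum. pose proof (sumN_nn _ n HA0). lra. }
  assert (Hab := infinite_sum_plus _ _ _ _ Hal Hbl).
  assert (al + bl <= s + eps) by (apply (lim_le_bound _ _ _ Hab); auto).
  assert (mu A <= al).
  { apply (subadd A EA al); [intros n; apply Hn| |].
    - intros p Ap. destruct (Hc p (or_introl Ap)) as [n Hn']. exists n; split; auto.
    - intros n; apply lim_ge_partial; auto. }
  assert (mu B <= bl).
  { apply (subadd B EB bl); [intros n; apply Hn| |].
    - intros p Bp. destruct (Hc p (or_intror Bp)) as [n Hn']. exists n; split; auto.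
    - intros n; apply lim_ge_partial; auto. }
  lra. }
  apply le_epsilon. intros eps He. pose proof (main (eps / 2) ltac:(lra)). lra.
Qed.

End OM.

Lemma box_map {P Bx : Type} (inb : Bx -> P -> Prop) (vol : Bx -> R) (e0 : Bx) (F : P -> P) (beta : Bx -> Bx) c Y :
  (forall b, 0 <= vol b) -> vol e0 = 0 -> 0 <= c ->
  (forall b p, inb b p -> inb (beta b) (F p)) -> (forall b, vol (beta b) <= c * vol b) ->
  fin inb vol Y -> fin inb vol (img F Y) /\ mu inb vol (img F Y) <= c * mu inb vol Y.
Proof.
  intros Hnn Hv0 Hc Hin Hv HY. apply (image_bound inb vol Hnn e0 Hv0); auto.
  intros b eps He. exists (beta b :: nil). split.
  - intros p Hp _. exists (beta b); simpl; auto.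
  - simpl. specialize (Hv b). lra.
Qed.

Lemma lsum_map {A B} (f : B -> R) (g : A -> B) l : lsum f (map g l) = lsum (fun x => f (g x)) l.
Proof. induction l; simpl; auto. rewrite IHl; auto. Qed.

Lemma lsum_flat_map {A B} (f : B -> R) (g : A -> list B) l :
  lsum f (flat_map g l) = lsum (fun x => lsum f (g x)) l.
Proof. induction l; simpl; auto. rewrite lsum_app, IHl; auto. Qed.

Lemma lsum_const {A} (f : A -> R) l c : (forall x, In x l -> f x = c) -> lsum f l = INR (length l) * c.
Proof. induction l; intros H; [simpl; lra|].
  change (lsum f (a::l)) with (f a + lsum f l). change (length (a::l)) with (S (length l)).
  rewrite H by (left; auto). rewrite IHl by (intros; apply H; right; auto).
  rewrite S_INR. lra. Qed.

Lemma lsum_ext {A} (f g : A -> R) l : (forall x, In x l -> f x = g x) -> lsum f l = lsum g l.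
Proof. induction l; intros H; simpl; auto. rewrite H by (left; auto). rewrite IHl; auto. intros; apply H; right; auto. Qed.

Lemma lsum_scal {A} (f : A -> R) c l : lsum (fun x => c * f x) l = c * lsum f l.
Proof. induction l; simpl; [lra|]. rewrite IHl. lra. Qed.

Definition len (I : R * R) := snd I - fst I.
Definition mid (I : R * R) := (fst I + snd I) / 2.

Lemma subdiv1 a b k g : a < b -> (1 <= k)%nat -> 0 < g ->
  exists l : list (R * R), length l = k /\
   (forall x, a < x < b -> exists I, In I l /\ fst I < x < snd I) /\
   (forall I, In I l -> len I = (b - a) * (1 + g) / INR k).
Proof.
  intros Hab Hk Hg.
  set (h := (b - a) / INR k). set (e := g * h / 2).
  exists (map (fun i => (a + INR i * h - e, a + INR (S i) * h + e)) (seq 0 k)).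
  assert (Hk0 : 0 < INR k) by (apply lt_0_INR; lia).
  assert (Hh : 0 < h) by (unfold h; apply Rdiv_lt_0_compat; lra).
  assert (He : 0 < e) by (unfold e; nra).
  split; [rewrite length_map, length_seq; auto|split].
  - assert (Hc : forall n, (1 <= n <= k)%nat -> forall x, a < x < a + INR n * h + e ->
       exists i, (i < n)%nat /\ a + INR i * h - e < x < a + INR (S i) * h + e).
    { intros n Hn. induction n as [|n IH]; [lia|]. intros x Hx.
      destruct (Nat.eq_dec n 0) as [->|Hn0].
      - exists 0%nat. split; [lia|]. replace (INR 1) with 1 in * by reflexivity.
        replace (INR 0) with 0 by reflexivity. lra.
      - destruct (Rlt_dec x (a + INR n * h + e)).
        + destruct (IH ltac:(lia) x ltac:(lra)) as [i [Hi Hx']]. exists i; split; [lia|auto].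
        + exists n. split; [lia|]. rewrite S_INR in *. lra. }
    intros x Hx. destruct (Hc k ltac:(lia) x) as [i [Hi Hx']].
    { assert (INR k * h = b - a) by (unfold h; field; lra). lra. }
    exists (a + INR i * h - e, a + INR (S i) * h + e). split; [|simpl; auto].
    apply in_map_iff. exists i; split; auto. apply in_seq; lia.
  - intros I HI. apply in_map_iff in HI. destruct HI as [i [<- _]]. unfold len; cbn [fst snd].
    rewrite S_INR. unfold e, h. field. lra.
Qed.

Lemma big_nat X Y : 0 < Y -> exists k, (1 <= k)%nat /\ X / INR k < Y.
Proof.
  intros HY. destruct (INR_unbounded (Rabs X / Y)) as [n Hn]. exists (S n). split; [lia|].
  assert (H0 : 0 < INR (S n)) by (apply lt_0_INR; lia). rewrite S_INR in *.
  apply Rle_lt_trans with (Rabs X / (INR n + 1)).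
  - unfold Rdiv. apply Rmult_le_compat_r; [left; apply Rinv_0_lt_compat; lra| apply Rle_abs].
  - apply Rmult_lt_reg_r with (INR n + 1); [lra|]. unfold Rdiv. rewrite Rmult_assoc, Rinv_l by lra.
    apply Rmult_lt_reg_r with (/ Y); [apply Rinv_0_lt_compat; lra|].
    rewrite Rmult_1_r. rewrite (Rmult_comm Y), Rmult_assoc, Rinv_r by lra. unfold Rdiv in Hn. lra.
Qed.

Lemma small_g V e : 0 <= V -> 0 < e -> exists g, 0 < g <= 1 /\ 3 * g * V <= e.
Proof.
  intros HV He. exists (Rmin 1 (e / (3 * V + 1))).
  assert (0 < e / (3 * V + 1)) by (apply Rdiv_lt_0_compat; lra).
  split; [split; [apply Rmin_glb_lt; lra| apply Rmin_l]|].
  apply Rle_trans with (3 * (e / (3 * V + 1)) * V).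
  - apply Rmult_le_compat_r; auto. apply Rmult_le_compat_l; [lra|apply Rmin_r].
  - replace (3 * (e / (3 * V + 1)) * V) with (e * (3 * V / (3 * V + 1))) by (field; lra).
    assert (3 * V / (3 * V + 1) <= 1).
    { apply Rmult_le_reg_r with (3 * V + 1); [lra|]. unfold Rdiv. rewrite Rmult_assoc, Rinv_l; lra. }
    nra.
Qed.

Definition mu3 := mu in_box3 vol_box3.
Definition fin3 := fin in_box3 vol_box3.
Definition e03 : box3 := ((0, 0), (0, 0), (0, 0)).

Lemma vol3_nn b : 0 <= vol_box3 b.
Proof. destruct b as [[i1 i2] i3]. simpl.
  repeat apply Rmult_le_pos; apply Rmax_l. Qed.
Lemma vol3_e0 : vol_box3 e03 = 0.
Proof. unfold vol_box3, e03; simpl. rewrite Rminus_diag, Rmax_left; lra. Qed.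

Lemma rmax0 x : 0 <= x -> Rmax 0 x = x.
Proof. intros; apply Rmax_right; auto. Qed.

Definition tsh (f : pt2 -> R) (p : pt3) : pt3 := (fst p, snd p + f (fst p)).
Definition Lip (K : R) (f : pt2 -> R) :=
  forall x y, Rabs (f x - f y) <= K * (Rabs (fst x - fst y) + Rabs (snd x - snd y)).

Lemma tsh_le f K Y : 0 <= K -> Lip K f -> fin3 Y -> fin3 (img (tsh f) Y) /\ mu3 (img (tsh f) Y) <= mu3 Y.
Proof.
  intros HK Hf HY. replace (mu3 Y) with (1 * mu3 Y) by ring.
  apply (image_bound in_box3 vol_box3 vol3_nn e03 vol3_e0); auto; [lra|].
  intros b eps He. destruct b as [[[a1 b1] [a2 b2]] [a3 b3]].
  destruct (Rlt_dec a1 b1) as [H1|H1]; [destruct (Rlt_dec a2 b2) as [H2|H2]; [destruct (Rlt_dec a3 b3) as [H3|H3]|]|];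
  try (exists nil; split; [intros [[x y] t] Hp; simpl in Hp; lra|change (lsum vol_box3 nil) with 0; pose proof (vol3_nn (((a1, b1), (a2, b2)), (a3, b3))); lra]).
  set (L1 := b1 - a1). set (L2 := b2 - a2). set (L3 := b3 - a3).
  destruct (small_g (L1 * L2 * L3) (eps / 2)) as [g [Hg Hg2]];
    [unfold L1, L2, L3; repeat apply Rmult_le_pos; lra|lra|].
  destruct (big_nat (8 * (L1 * L2 * K * (L1 + L2))) (eps / 2)) as [k [Hk Hk2]]; [lra|].
  destruct (subdiv1 a1 b1 k g H1 Hk (proj1 Hg)) as [l1 [Hl1a [Hl1b Hl1c]]].
  destruct (subdiv1 a2 b2 k g H2 Hk (proj1 Hg)) as [l2 [Hl2a [Hl2b Hl2c]]].
  set (h1 := (b1 - a1) * (1 + g) / INR k). set (h2 := (b2 - a2) * (1 + g) / INR k).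
  set (dl := K * (h1 + h2) / 2).
  assert (Hk0 : 0 < INR k) by (apply lt_0_INR; lia).
  assert (Hh1 : 0 < h1) by (unfold h1; apply Rdiv_lt_0_compat; nra).
  assert (Hh2 : 0 < h2) by (unfold h2; apply Rdiv_lt_0_compat; nra).
  assert (Hdl : 0 <= dl) by (unfold dl; nra).
  exists (flat_map (fun J1 => map (fun J2 => ((J1, J2), (a3 + f (mid J1, mid J2) - dl, b3 + f (mid J1, mid J2) + dl))) l2) l1).
  split.
  - intros [[x y] t] Hp _. simpl in Hp. destruct Hp as [Hx [Hy Ht]].
    destruct (Hl1b x Hx) as [J1 [HJ1 HxJ]]. destruct (Hl2b y Hy) as [J2 [HJ2 HyJ]].
    eexists. split.
    + apply in_flat_map. exists J1. split; auto. apply in_map_iff. exists J2. split; [reflexivity|auto].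
    + unfold tsh; simpl. pose proof (Hl1c J1 HJ1) as E1. pose proof (Hl2c J2 HJ2) as E2.
      unfold len in E1, E2. fold h1 in E1. fold h2 in E2.
      specialize (Hf (x, y) (mid J1, mid J2)). simpl in Hf. unfold mid in Hf.
      assert (Rabs (x - (fst J1 + snd J1) / 2) <= h1 / 2) by (apply Rabs_le; lra).
      assert (Rabs (y - (fst J2 + snd J2) / 2) <= h2 / 2) by (apply Rabs_le; lra).
      assert (Hfd : Rabs (f (x, y) - f ((fst J1 + snd J1) / 2, (fst J2 + snd J2) / 2)) <= dl).
      { unfold dl. eapply Rle_trans; [apply Hf|]. nra. }
      apply abs_le_inv in Hfd. unfold mid. repeat split; lra.
  - rewrite lsum_flat_map.
    set (c := h1 * h2 * (L3 + 2 * dl)).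
    rewrite (lsum_const _ l1 (INR k * c)).
    2:{ intros J1 HJ1. rewrite lsum_map. rewrite (lsum_const _ l2 c); [rewrite Hl2a; auto|].
        intros J2 HJ2. unfold vol_box3; simpl. pose proof (Hl1c J1 HJ1) as E1. pose proof (Hl2c J2 HJ2) as E2.
        unfold len in E1, E2. fold h1 in E1. fold h2 in E2.
        rewrite E1, E2. rewrite !rmax0 by (unfold L3 in *; lra). unfold c, L3. ring. }
    rewrite Hl1a. unfold c, dl, h1, h2. fold L1 L2.
    replace (INR k * (INR k * (L1 * (1 + g) / INR k * (L2 * (1 + g) / INR k) *
      (L3 + 2 * (K * (L1 * (1 + g) / INR k + L2 * (1 + g) / INR k) / 2)))))
      with (L1 * L2 * L3 * ((1 + g) * (1 + g)) + (L1 * L2 * K * (L1 + L2)) * ((1+g)*(1+g)*(1+g)) / INR k) by (field; lra).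
    assert (HV : 0 <= L1 * L2 * L3) by (unfold L1, L2, L3; repeat apply Rmult_le_pos; lra).
    assert (HW : 0 <= L1 * L2 * K * (L1 + L2)) by (unfold L1, L2; repeat apply Rmult_le_pos; lra).
    assert (L1 * L2 * L3 * ((1 + g) * (1 + g)) <= L1 * L2 * L3 + 3 * g * (L1 * L2 * L3)).
    { assert (Hg3 : (1+g)*(1+g) <= 1 + 3*g) by (destruct Hg; nra).
      apply Rle_trans with (L1*L2*L3*(1+3*g)); [apply Rmult_le_compat_l; auto| right; ring]. }
    assert ((L1 * L2 * K * (L1 + L2)) * ((1+g)*(1+g)*(1+g)) / INR k <= 8 * (L1 * L2 * K * (L1 + L2)) / INR k).
    { unfold Rdiv. apply Rmult_le_compat_r; [left; apply Rinv_0_lt_compat; auto|]. 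
      assert ((1+g)*(1+g)*(1+g) <= 8) by (destruct Hg; nra). nra. }
    unfold vol_box3; simpl. rewrite !rmax0 by lra. fold L1 L2 L3. lra.
Qed.

Lemma img_img {T} (F G : T -> T) Y : (forall p, G (F p) = p) -> img G (img F Y) = Y.
Proof. intros H. apply pred_ext. intros q. split.
  - intros [p' [[p [Yp <-]] <-]]. rewrite H; auto.
  - intros Yq. exists (F q). split; [exists q; auto|apply H]. Qed.

Lemma img_comp {T} (F G : T -> T) Y : img G (img F Y) = img (fun p => G (F p)) Y.
Proof. apply pred_ext. intros q. split.
  - intros [p' [[p [Yp <-]] <-]]. exists p; auto.
  - intros [p [Yp <-]]. exists (F p). split; auto. exists p; auto. Qed.

Lemma img_ext {T} (F G : T -> T) Y : (forall p, Y p -> F p = G p) -> img F Y = img G Y.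
Proof. intros H. apply pred_ext. intros q. split; intros [p [Yp <-]]; exists p; split; auto. rewrite H; auto. Qed.

Lemma mu3_img_eq F G c c' Y : 0 < c -> c * c' = 1 -> fin3 Y ->
  (forall Z, fin3 Z -> fin3 (img F Z) /\ mu3 (img F Z) <= c * mu3 Z) ->
  (forall Z, fin3 Z -> fin3 (img G Z) /\ mu3 (img G Z) <= c' * mu3 Z) ->
  (forall p, G (F p) = p) -> fin3 (img F Y) /\ mu3 (img F Y) = c * mu3 Y.
Proof.
  intros Hc Hcc HY HF HG Hinv. destruct (HF Y HY) as [H1 H2]. split; auto.
  destruct (HG _ H1) as [_ H3]. rewrite img_img in H3 by auto.
  assert (c * mu3 Y <= c * (c' * mu3 (img F Y))) by (apply Rmult_le_compat_l; lra).
  replace (c * (c' * mu3 (img F Y))) with (mu3 (img F Y)) in H by (rewrite <- Rmult_assoc, Hcc; ring).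
  lra.
Qed.

Lemma tsh_eq f K Y : 0 <= K -> Lip K f -> fin3 Y -> fin3 (img (tsh f) Y) /\ mu3 (img (tsh f) Y) = mu3 Y.
Proof.
  intros HK Hf HY. replace (mu3 Y) with (1 * mu3 Y) by ring.
  apply (mu3_img_eq _ (tsh (fun x => - f x)) 1 1); auto; try lra.
  - intros Z HZ. rewrite Rmult_1_l. apply (tsh_le f K); auto.
  - intros Z HZ. rewrite Rmult_1_l. apply (tsh_le _ K); auto.
    intros x y. replace (- f x - - f y) with (- (f x - f y)) by ring. rewrite Rabs_Ropp. apply Hf.
  - intros [xy t]. unfold tsh; simpl. f_equal. ring.
Qed.

Definition sI (a : R) (I : R * R) : R * R :=
  if Rle_dec 0 a then (a * fst I, a * snd I) else (a * snd I, a * fst I).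

Lemma sI_in a I x : a <> 0 -> fst I < x < snd I -> fst (sI a I) < a * x < snd (sI a I).
Proof. intros Ha Hx. unfold sI. destruct (Rle_dec 0 a); simpl.
  - assert (0 < a) by lra. split; apply Rmult_lt_compat_l; lra.
  - split; apply Rmult_lt_gt_compat_neg_l; lra. Qed.

Lemma sI_len a I : Rmax 0 (snd (sI a I) - fst (sI a I)) = Rabs a * Rmax 0 (snd I - fst I).
Proof. unfold sI. destruct (Rle_dec 0 a); simpl.
  - rewrite Rabs_right by lra. replace (a * snd I - a * fst I) with (a * (snd I - fst I)) by ring.
    unfold Rmax. destruct (Rle_dec 0 (a * (snd I - fst I))), (Rle_dec 0 (snd I - fst I)); nra.
  - rewrite Rabs_left by lra. replace (a * fst I - a * snd I) with (- a * (snd I - fst I)) by ring.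
    unfold Rmax. destruct (Rle_dec 0 (- a * (snd I - fst I))), (Rle_dec 0 (snd I - fst I)); nra. Qed.

Definition sc (a b c : R) (p : pt3) : pt3 := ((a * fst (fst p), b * snd (fst p)), c * snd p).

Lemma sc_le a b c Y : a <> 0 -> b <> 0 -> c <> 0 -> fin3 Y ->
  fin3 (img (sc a b c) Y) /\ mu3 (img (sc a b c) Y) <= (Rabs a * Rabs b * Rabs c) * mu3 Y.
Proof.
  intros Ha Hb Hc HY.
  apply (box_map in_box3 vol_box3 e03 _ (fun bx => ((sI a (fst (fst bx)), sI b (snd (fst bx))), sI c (snd bx))));
    auto using vol3_nn, vol3_e0.
  - pose proof (Rabs_pos a); pose proof (Rabs_pos b); pose proof (Rabs_pos c). repeat apply Rmult_le_pos; auto.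
  - intros [[I1 I2] I3] [[x y] t] H. simpl in H |- *. destruct H as [H1 [H2 H3]].
    repeat split; try apply sI_in; auto; apply sI_in; auto.
  - intros [[I1 I2] I3]. unfold vol_box3. simpl. rewrite !sI_len. right; ring.
Qed.

Lemma sc_eq a b c Y : a <> 0 -> b <> 0 -> c <> 0 -> fin3 Y ->
  fin3 (img (sc a b c) Y) /\ mu3 (img (sc a b c) Y) = (Rabs a * Rabs b * Rabs c) * mu3 Y.
Proof.
  intros Ha Hb Hc HY.
  apply (mu3_img_eq _ (sc (/a) (/b) (/c)) _ (Rabs (/a) * Rabs (/b) * Rabs (/c))); auto.
  - pose proof (Rabs_pos_lt a Ha); pose proof (Rabs_pos_lt b Hb); pose proof (Rabs_pos_lt c Hc).
    repeat apply Rmult_lt_0_compat; auto.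
  - rewrite !Rabs_inv. field. repeat split; apply Rabs_no_R0; auto.
  - intros Z HZ; apply sc_le; auto.
  - intros Z HZ; apply sc_le; auto; apply Rinv_neq_0_compat; auto.
  - intros [[x y] t]. unfold sc; simpl. f_equal; [f_equal|]; field; auto.
Qed.

Definition sw13 (p : pt3) : pt3 := ((snd p, snd (fst p)), fst (fst p)).
Definition sw23 (p : pt3) : pt3 := ((fst (fst p), snd p), snd (fst p)).

Lemma sw13_le Y : fin3 Y -> fin3 (img sw13 Y) /\ mu3 (img sw13 Y) <= 1 * mu3 Y.
Proof.
  intros HY. apply (box_map in_box3 vol_box3 e03 _ (fun bx => ((snd bx, snd (fst bx)), fst (fst bx))));
    auto using vol3_nn, vol3_e0; try lra.
  - intros [[I1 I2] I3] [[x y] t] H. simpl in H |- *. tauto.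
  - intros [[I1 I2] I3]. unfold vol_box3. simpl. right; ring.
Qed.
Lemma sw23_le Y : fin3 Y -> fin3 (img sw23 Y) /\ mu3 (img sw23 Y) <= 1 * mu3 Y.
Proof.
  intros HY. apply (box_map in_box3 vol_box3 e03 _ (fun bx => ((fst (fst bx), snd bx), snd (fst bx))));
    auto using vol3_nn, vol3_e0; try lra.
  - intros [[I1 I2] I3] [[x y] t] H. simpl in H |- *. tauto.
  - intros [[I1 I2] I3]. unfold vol_box3. simpl. right; ring.
Qed.
Lemma sw13_eq Y : fin3 Y -> fin3 (img sw13 Y) /\ mu3 (img sw13 Y) = mu3 Y.
Proof. intros HY. replace (mu3 Y) with (1 * mu3 Y) by ring.
  apply (mu3_img_eq _ sw13 1 1); auto; try lra. apply sw13_le. apply sw13_le.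
  intros [[x y] t]; reflexivity. Qed.
Lemma sw23_eq Y : fin3 Y -> fin3 (img sw23 Y) /\ mu3 (img sw23 Y) = mu3 Y.
Proof. intros HY. replace (mu3 Y) with (1 * mu3 Y) by ring.
  apply (mu3_img_eq _ sw23 1 1); auto; try lra. apply sw23_le. apply sw23_le.
  intros [[x y] t]; reflexivity. Qed.

Definition LipR (K : R) (g : R -> R) := forall x y, Rabs (g x - g y) <= K * Rabs (x - y).

Definition sh1 (g : R -> R) (p : pt3) : pt3 := ((fst (fst p) + g (snd (fst p)), snd (fst p)), snd p).
Definition sh2 (g : R -> R) (p : pt3) : pt3 := ((fst (fst p), snd (fst p) + g (fst (fst p))), snd p).

Lemma sh1_eq g K Y : 0 <= K -> LipR K g -> fin3 Y -> fin3 (img (sh1 g) Y) /\ mu3 (img (sh1 g) Y) = mu3 Y.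
Proof.
  intros HK Hg HY.
  assert (E : img (sh1 g) Y = img sw13 (img (tsh (fun p => g (snd p))) (img sw13 Y))).
  { rewrite !img_comp. apply img_ext. intros [[x y] t] _. reflexivity. }
  rewrite E. destruct (sw13_eq Y HY) as [F1 E1].
  destruct (tsh_eq (fun p => g (snd p)) K (img sw13 Y) HK) as [F2 E2]; auto.
  { intros x y. eapply Rle_trans; [apply Hg|]. pose proof (Rabs_pos (fst x - fst y)). nra. }
  destruct (sw13_eq _ F2) as [F3 E3]. split; auto. lra.
Qed.

Lemma sh2_eq g K Y : 0 <= K -> LipR K g -> fin3 Y -> fin3 (img (sh2 g) Y) /\ mu3 (img (sh2 g) Y) = mu3 Y.
Proof.
  intros HK Hg HY.
  assert (E : img (sh2 g) Y = img sw23 (img (tsh (fun p => g (fst p))) (img sw23 Y))).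
  { rewrite !img_comp. apply img_ext. intros [[x y] t] _. reflexivity. }
  rewrite E. destruct (sw23_eq Y HY) as [F1 E1].
  destruct (tsh_eq (fun p => g (fst p)) K (img sw23 Y) HK) as [F2 E2]; auto.
  { intros x y. eapply Rle_trans; [apply Hg|]. pose proof (Rabs_pos (snd x - snd y)). nra. }
  destruct (sw23_eq _ F2) as [F3 E3]. split; auto. lra.
Qed.

Definition close3 (r : R) (p q : pt3) : Prop :=
  Rabs (fst (fst p) - fst (fst q)) < r /\ Rabs (snd (fst p) - snd (fst q)) < r /\ Rabs (snd p - snd q) < r.

Lemma refine3 r b eps : 0 < r -> 0 < eps -> exists l,
  (forall p, in_box3 b p -> exists b', In b' l /\ in_box3 b' p) /\
  lsum vol_box3 l <= vol_box3 b + eps /\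
  (forall b', In b' l -> forall p q, in_box3 b' p -> in_box3 b' q -> close3 r p q).
Proof.
  intros Hr He. destruct b as [[[a1 b1] [a2 b2]] [a3 b3]].
  destruct (Rlt_dec a1 b1) as [H1|H1]; [destruct (Rlt_dec a2 b2) as [H2|H2]; [destruct (Rlt_dec a3 b3) as [H3|H3]|]|];
  try (exists nil; split; [intros [[x y] t] Hp; simpl in Hp; lra|
     split; [change (lsum vol_box3 nil) with 0; pose proof (vol3_nn (((a1, b1), (a2, b2)), (a3, b3))); lra|
     intros b' []]]).
  set (L1 := b1 - a1). set (L2 := b2 - a2). set (L3 := b3 - a3).
  assert (HV : 0 <= L1 * L2 * L3) by (unfold L1, L2, L3; repeat apply Rmult_le_pos; lra).
  destruct (small_g (L1 * L2 * L3) (eps / 3)) as [g [Hg Hg2]]; [auto|lra|].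
  destruct (big_nat (2 * (L1 + L2 + L3)) r) as [k [Hk Hk2]]; [lra|].
  destruct (subdiv1 a1 b1 k g H1 Hk (proj1 Hg)) as [l1 [Hl1a [Hl1b Hl1c]]].
  destruct (subdiv1 a2 b2 k g H2 Hk (proj1 Hg)) as [l2 [Hl2a [Hl2b Hl2c]]].
  destruct (subdiv1 a3 b3 k g H3 Hk (proj1 Hg)) as [l3 [Hl3a [Hl3b Hl3c]]].
  assert (Hk0 : 0 < INR k) by (apply lt_0_INR; lia).
  set (h1 := (b1 - a1) * (1 + g) / INR k). set (h2 := (b2 - a2) * (1 + g) / INR k).
  set (h3 := (b3 - a3) * (1 + g) / INR k).
  assert (Hh1 : 0 < h1) by (unfold h1; apply Rdiv_lt_0_compat; nra).
  assert (Hh2 : 0 < h2) by (unfold h2; apply Rdiv_lt_0_compat; nra).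
  assert (Hh3 : 0 < h3) by (unfold h3; apply Rdiv_lt_0_compat; nra).
  assert (Hsm : h1 < r /\ h2 < r /\ h3 < r).
  { assert (forall L, 0 < L -> L <= L1 + L2 + L3 -> L * (1 + g) / INR k < r).
    { intros L HL HL'. eapply Rle_lt_trans; [|apply Hk2]. unfold Rdiv. apply Rmult_le_compat_r.
      left; apply Rinv_0_lt_compat; auto. destruct Hg; nra. }
    unfold h1, h2, h3; repeat split; apply H; unfold L1, L2, L3 in *; lra. }
  exists (flat_map (fun J1 => flat_map (fun J2 => map (fun J3 => ((J1, J2), J3)) l3) l2) l1).
  split; [|split].
  - intros [[x y] t] Hp. simpl in Hp. destruct Hp as [Hx [Hy Ht]].
    destruct (Hl1b x Hx) as [J1 [HJ1 HxJ]]. destruct (Hl2b y Hy) as [J2 [HJ2 HyJ]].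
    destruct (Hl3b t Ht) as [J3 [HJ3 HtJ]].
    exists ((J1, J2), J3). split.
    + apply in_flat_map. exists J1. split; auto. apply in_flat_map. exists J2. split; auto.
      apply in_map_iff. exists J3. split; auto.
    + simpl. auto.
  - rewrite lsum_flat_map.
    rewrite (lsum_const _ l1 (INR k * (INR k * (h1 * h2 * h3)))).
    2:{ intros J1 HJ1. rewrite lsum_flat_map.
        rewrite (lsum_const _ l2 (INR k * (h1 * h2 * h3))); [rewrite Hl2a; auto|].
        intros J2 HJ2. rewrite lsum_map. rewrite (lsum_const _ l3 (h1 * h2 * h3)); [rewrite Hl3a; auto|].
        intros J3 HJ3. unfold vol_box3; simpl.
        pose proof (Hl1c J1 HJ1) as E1. pose proof (Hl2c J2 HJ2) as E2. pose proof (Hl3c J3 HJ3) as E3.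
        unfold len in E1, E2, E3. fold h1 in E1. fold h2 in E2. fold h3 in E3.
        rewrite E1, E2, E3. rewrite !rmax0 by lra. ring. }
    rewrite Hl1a. unfold h1, h2, h3. fold L1 L2 L3.
    replace (INR k * (INR k * (INR k * (L1 * (1 + g) / INR k * (L2 * (1 + g) / INR k) * (L3 * (1 + g) / INR k)))))
      with (L1 * L2 * L3 * ((1 + g) * (1 + g) * (1 + g))) by (field; lra).
    assert (Hg3 : (1+g)*(1+g)*(1+g) <= 1 + 7*g) by (destruct Hg; nra).
    assert (L1 * L2 * L3 * ((1 + g) * (1 + g) * (1 + g)) <= L1 * L2 * L3 * (1 + 7 * g)) by (apply Rmult_le_compat_l; auto).
    unfold vol_box3; simpl. rewrite !rmax0 by lra. fold L1 L2 L3.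
    assert (L1 * L2 * L3 * (1 + 7 * g) = L1 * L2 * L3 + 7 / 3 * (3 * g * (L1 * L2 * L3))) by field. lra.
  - intros b' Hb' [[x y] t] [[x' y'] t'] Hp Hq.
    apply in_flat_map in Hb'. destruct Hb' as [J1 [HJ1 Hb']].
    apply in_flat_map in Hb'. destruct Hb' as [J2 [HJ2 Hb']].
    apply in_map_iff in Hb'. destruct Hb' as [J3 [<- HJ3]].
    simpl in Hp, Hq. unfold close3; simpl.
    pose proof (Hl1c J1 HJ1) as E1. pose proof (Hl2c J2 HJ2) as E2. pose proof (Hl3c J3 HJ3) as E3.
    unfold len in E1, E2, E3. fold h1 in E1. fold h2 in E2. fold h3 in E3.
    repeat split; apply abs_lt; lra.
Qed.

Lemma separation3 A B r : 0 < r -> (forall p q, A p -> B q -> ~ close3 r p q) ->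
  fin3 (fun p => A p \/ B p) -> fin3 A /\ fin3 B /\ mu3 A + mu3 B <= mu3 (fun p => A p \/ B p).
Proof.
  intros Hr Hs HU. apply (separation in_box3 vol_box3 vol3_nn e03 vol3_e0 A B (close3 r)); auto.
  intros b eps He. apply refine3; auto.
Qed.

Definition len0 (I : R * R) := Rmax 0 (snd I - fst I).
Definition inter1 (X I : R * R) : R * R := (Rmax (fst X) (fst I), Rmin (snd X) (snd I)).

Lemma core1 p q a b : a <= b ->
  Rmax 0 (q - p) = Rmax 0 (Rmin q a - p) + Rmax 0 (Rmin q b - Rmax p a) + Rmax 0 (q - Rmax p b).
Proof.
  intros Hab. unfold Rmin.
  destruct (Rle_dec q a), (Rle_dec q b); unfold Rmax; destruct (Rle_dec p a), (Rle_dec p b);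
  repeat match goal with |- context [Rle_dec ?x ?y] => destruct (Rle_dec x y) end; lra.
Qed.

Lemma split1 X I a b : a <= b ->
  len0 (inter1 X I) = len0 (inter1 X (fst I, Rmin (snd I) a)) +
    len0 (inter1 X (Rmax (fst I) a, Rmin (snd I) b)) + len0 (inter1 X (Rmax (fst I) b, snd I)).
Proof.
  intros Hab. unfold len0, inter1; simpl. rewrite !Rmin_assoc, !Rmax_assoc. apply core1; auto.
Qed.

Lemma split0 I a b : a <= b ->
  len0 I = len0 (fst I, Rmin (snd I) a) + len0 (Rmax (fst I) a, Rmin (snd I) b) + len0 (Rmax (fst I) b, snd I).
Proof. intros Hab. unfold len0; simpl. apply core1; auto. Qed.

Lemma vol3_len b : vol_box3 b = len0 (fst (fst b)) * len0 (snd (fst b)) * len0 (snd b).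
Proof. destruct b as [[i1 i2] i3]. reflexivity. Qed.

Definition inter3 (X K : box3) : box3 :=
  ((inter1 (fst (fst X)) (fst (fst K)), inter1 (snd (fst X)) (snd (fst K))), inter1 (snd X) (snd K)).

Definition inK (K : box3) (p : pt3) : Prop :=
  fst (fst (fst K)) <= fst (fst p) <= snd (fst (fst K)) /\
  fst (snd (fst K)) <= snd (fst p) <= snd (snd (fst K)) /\
  fst (snd K) <= snd p <= snd (snd K).

Lemma len0_nn I : 0 <= len0 I.
Proof. apply Rmax_l. Qed.

Lemma lsum_le {A} (f g : A -> R) l : (forall x, In x l -> f x <= g x) -> lsum f l <= lsum g l.
Proof. induction l; intros H; simpl; [lra|]. pose proof (H a (or_introl eq_refl)).
  assert (lsum f l <= lsum g l) by (apply IHl; intros; apply H; right; auto). lra. Qed.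

Lemma lsum_plus {A} (f g : A -> R) l : lsum (fun x => f x + g x) l = lsum f l + lsum g l.
Proof. induction l; simpl; [lra|]. rewrite IHl; lra. Qed.

Lemma lsum_cons {A} (f : A -> R) x l : lsum f (x :: l) = f x + lsum f l.
Proof. reflexivity. Qed.

Lemma lbound_list : forall L K, (forall p, inK K p -> exists B, In B L /\ in_box3 B p) ->
  vol_box3 K <= lsum (fun B => vol_box3 (inter3 B K)) L.
Proof.
  induction L as [|B0 L IH]; intros K HK.
  - destruct K as [[[l1 h1] [l2 h2]] [l3 h3]].
    destruct (Rle_dec l1 h1), (Rle_dec l2 h2), (Rle_dec l3 h3);
      try (destruct (HK ((l1, l2), l3)) as [B [[] _]]; unfold inK; simpl; lra);
      rewrite vol3_len; simpl; unfold len0; simpl;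
      try (rewrite (Rmax_left 0 (h1 - l1)) by lra); try (rewrite (Rmax_left 0 (h2 - l2)) by lra);
      try (rewrite (Rmax_left 0 (h3 - l3)) by lra); lra.
  - destruct B0 as [[[a1 b1] [a2 b2]] [a3 b3]] eqn:EB0.
    assert (Hnn : forall B, 0 <= vol_box3 (inter3 B K)) by (intros; apply vol3_nn).
    destruct (Rlt_dec a1 b1) as [H1|H1]; [destruct (Rlt_dec a2 b2) as [H2|H2]; [destruct (Rlt_dec a3 b3) as [H3|H3]|]|];
    [| (assert (vol_box3 K <= lsum (fun B => vol_box3 (inter3 B K)) L);
        [apply IH; intros p Hp; destruct (HK p Hp) as [B [[<-|HB] HpB]];
          [simpl in HpB; destruct p as [[x y] t]; simpl in HpB; lra| eauto]|
        rewrite lsum_cons; pose proof (Hnn (((a1, b1), (a2, b2)), (a3, b3))); lra]) ..].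
    destruct K as [[[l1 h1] [l2 h2]] [l3 h3]] eqn:EK.
    set (M1 := (Rmax l1 a1, Rmin h1 b1)). set (M2 := (Rmax l2 a2, Rmin h2 b2)). set (M3 := (Rmax l3 a3, Rmin h3 b3)).
    set (P1 := (((l1, Rmin h1 a1), (l2, h2)), (l3, h3))).
    set (P2 := (((Rmax l1 b1, h1), (l2, h2)), (l3, h3))).
    set (P3 := ((M1, (l2, Rmin h2 a2)), (l3, h3))).
    set (P4 := ((M1, (Rmax l2 b2, h2)), (l3, h3))).
    set (P5 := ((M1, M2), (l3, Rmin h3 a3))).
    set (P6 := ((M1, M2), (Rmax l3 b3, h3))).
    set (C := ((M1, M2), M3)).
    assert (Hid : forall X, vol_box3 (inter3 X K) = vol_box3 (inter3 X P1) + vol_box3 (inter3 X P2) +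
       vol_box3 (inter3 X P3) + vol_box3 (inter3 X P4) + vol_box3 (inter3 X P5) + vol_box3 (inter3 X P6) +
       vol_box3 (inter3 X C)).
    { intros X. rewrite EK. rewrite !vol3_len. unfold inter3; simpl.
      rewrite (split1 (fst (fst X)) (l1, h1) a1 b1) by lra.
      rewrite (split1 (snd (fst X)) (l2, h2) a2 b2) by lra.
      rewrite (split1 (snd X) (l3, h3) a3 b3) by lra. simpl. unfold M1, M2, M3. ring. }
    assert (HidK : vol_box3 K = vol_box3 P1 + vol_box3 P2 + vol_box3 P3 + vol_box3 P4 + vol_box3 P5 +
       vol_box3 P6 + vol_box3 C).
    { rewrite EK. rewrite !vol3_len. simpl.
      rewrite (split0 (l1, h1) a1 b1) by lra. rewrite (split0 (l2, h2) a2 b2) by lra.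
      rewrite (split0 (l3, h3) a3 b3) by lra. simpl. unfold M1, M2, M3. ring. }
    assert (HC : vol_box3 C = vol_box3 (inter3 B0 K)).
    { rewrite EB0, EK. unfold C, M1, M2, M3, inter3, inter1. simpl.
      rewrite (Rmax_comm a1), (Rmax_comm a2), (Rmax_comm a3), (Rmin_comm b1), (Rmin_comm b2), (Rmin_comm b3).
      reflexivity. }
    assert (Hpc : forall Pj, (forall p, inK Pj p -> inK K p /\ ~ in_box3 B0 p) ->
              vol_box3 Pj <= lsum (fun B => vol_box3 (inter3 B Pj)) L).
    { intros Pj HPj. apply IH. intros p Hp. destruct (HPj p Hp) as [HpK Hn].
      rewrite EK in HpK. rewrite EB0 in Hn.
      destruct (HK p HpK) as [B [[<-|HB] HpB]]; [contradiction|eauto]. }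
    assert (Hr := fun x y => Rmin_l x y). assert (Hr2 := fun x y => Rmin_r x y).
    assert (Hm := fun x y => Rmax_l x y). assert (Hm2 := fun x y => Rmax_r x y).
    assert (G1 := Hpc P1 ltac:(intros [[x y] t]; rewrite EK, EB0; unfold P1, inK; simpl;
      intros [Ha [Hb Hc]]; split; [repeat split; try lra; pose proof (Hr h1 a1); lra|
      pose proof (Hr2 h1 a1); lra])).
    assert (G2 := Hpc P2 ltac:(intros [[x y] t]; rewrite EK, EB0; unfold P2, inK; simpl;
      intros [Ha [Hb Hc]]; split; [repeat split; try lra; pose proof (Hm l1 b1); lra|
      pose proof (Hm2 l1 b1); lra])).
    assert (G3 := Hpc P3 ltac:(intros [[x y] t]; rewrite EK, EB0; unfold P3, M1, inK; simpl;
      intros [Ha [Hb Hc]]; pose proof (Hm l1 a1); pose proof (Hr h1 b1); pose proof (Hr h2 a2);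
      pose proof (Hr2 h2 a2); split; [repeat split; lra| lra])).
    assert (G4 := Hpc P4 ltac:(intros [[x y] t]; rewrite EK, EB0; unfold P4, M1, inK; simpl;
      intros [Ha [Hb Hc]]; pose proof (Hm l1 a1); pose proof (Hr h1 b1); pose proof (Hm l2 b2);
      pose proof (Hm2 l2 b2); split; [repeat split; lra| lra])).
    assert (G5 := Hpc P5 ltac:(intros [[x y] t]; rewrite EK, EB0; unfold P5, M1, M2, inK; simpl;
      intros [Ha [Hb Hc]]; pose proof (Hm l1 a1); pose proof (Hr h1 b1); pose proof (Hm l2 a2);
      pose proof (Hr h2 b2); pose proof (Hr h3 a3); pose proof (Hr2 h3 a3); split; [repeat split; lra| lra])).
    assert (G6 := Hpc P6 ltac:(intros [[x y] t]; rewrite EK, EB0; unfold P6, M1, M2, inK; simpl;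
      intros [Ha [Hb Hc]]; pose proof (Hm l1 a1); pose proof (Hr h1 b1); pose proof (Hm l2 a2);
      pose proof (Hr h2 b2); pose proof (Hm l3 b3); pose proof (Hm2 l3 b3); split; [repeat split; lra| lra])).
    assert (Hsum : lsum (fun B => vol_box3 (inter3 B P1)) L + lsum (fun B => vol_box3 (inter3 B P2)) L +
      lsum (fun B => vol_box3 (inter3 B P3)) L + lsum (fun B => vol_box3 (inter3 B P4)) L +
      lsum (fun B => vol_box3 (inter3 B P5)) L + lsum (fun B => vol_box3 (inter3 B P6)) L <=
      lsum (fun B => vol_box3 (inter3 B K)) L).
    { rewrite <- !lsum_plus. apply lsum_le. intros B _. rewrite (Hid B).
      pose proof (Hnn B). pose proof (vol3_nn (inter3 B C)). lra. }
    rewrite lsum_cons. rewrite <- EB0, <- EK. lra.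
Qed.

Lemma gauge1 a b (Pn : R -> nat -> Prop) :
  (forall y N N', (N <= N')%nat -> Pn y N -> Pn y N') ->
  (forall x, a <= x <= b -> exists d N, 0 < d /\ forall y, Rabs (y - x) < d -> Pn y N) ->
  exists N, forall y, a <= y <= b -> Pn y N.
Proof.
  intros Hmono Hg. destruct (Rle_dec a b) as [Hab|Hab]; [|exists O; intros; lra].
  set (S := fun z => a <= z <= b /\ exists N, forall y, a <= y <= z -> Pn y N).
  assert (Sa : S a).
  { split; [lra|]. destruct (Hg a ltac:(lra)) as [d [N [Hd HN]]]. exists N. intros y Hy.
    apply HN. replace (y - a) with 0 by lra. rewrite Rabs_R0; lra. }
  destruct (completeness S) as [s [Hub Hlub]].
  - exists b. intros z [Hz _]. lra.
  - exists a; auto.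
  - assert (Has : a <= s) by (apply Hub; auto).
    assert (Hsb : s <= b) by (apply Hlub; intros z [Hz _]; lra).
    destruct (Hg s ltac:(lra)) as [d0 [N0 [Hd0 HN0]]].
    assert (Hz : exists z, S z /\ s - d0 < z).
    { apply NNPP; intros Hn. assert (is_upper_bound S (s - d0)).
      { intros z Sz. apply Rnot_lt_le. intros Hlt. apply Hn. exists z; auto. }
      specialize (Hlub _ H). lra. }
    destruct Hz as [z [[Hz1 [N1 HN1]] Hz2]].
    set (w := Rmin b (s + d0 / 2)).
    assert (Sw : S w).
    { split; [split; [unfold w; apply Rmin_glb; lra| unfold w; apply Rmin_l]|].
      exists (max N0 N1). intros y Hy. destruct (Rle_dec y z).
      - apply (Hmono y N1); [lia|]. apply HN1; lra.
      - apply (Hmono y N0); [lia|]. apply HN0. apply abs_lt.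
        assert (w <= s + d0 / 2) by (unfold w; apply Rmin_r). lra. }
    assert (w <= s) by (apply Hub; auto).
    assert (w = b).
    { unfold w in *. unfold Rmin in *. destruct (Rle_dec b (s + d0 / 2)); lra. }
    destruct Sw as [_ [N HN]]. exists N. intros y Hy. apply HN. lra.
Qed.

Lemma open_int x a b : a < x < b -> exists d, 0 < d /\ forall y, Rabs (y - x) < d -> a < y < b.
Proof. intros H. exists (Rmin (x - a) (b - x)). split; [apply Rmin_glb_lt; lra|].
  intros y Hy. apply abs_lt_inv in Hy. pose proof (Rmin_l (x - a) (b - x)). pose proof (Rmin_r (x - a) (b - x)). lra. Qed.

Lemma inv_small d : 0 < d -> exists N, forall N', (N <= N')%nat -> / (INR N' + 1) < d.
Proof.
  intros Hd. destruct (big_nat 1 d Hd) as [k [Hk Hk2]]. exists k. intros N' HN'.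
  assert (INR k <= INR N') by (apply le_INR; auto). assert (0 < INR k) by (apply lt_0_INR; lia).
  apply Rle_lt_trans with (1 / INR k); auto. unfold Rdiv. rewrite Rmult_1_l.
  apply Rinv_le_contravar; lra.
Qed.

Lemma inv_mono N N' : (N <= N')%nat -> / (INR N' + 1) <= / (INR N + 1).
Proof. intros H. apply Rinv_le_contravar. pose proof (pos_INR N); lra. apply le_INR in H; lra. Qed.

Lemma compact3 (c : nat -> box3) l1 h1 l2 h2 l3 h3 :
  (forall x y z, l1 <= x <= h1 -> l2 <= y <= h2 -> l3 <= z <= h3 -> exists n, in_box3 (c n) ((x, y), z)) ->
  exists N, forall x y z, l1 <= x <= h1 -> l2 <= y <= h2 -> l3 <= z <= h3 ->
     exists n, (n < N)%nat /\ in_box3 (c n) ((x, y), z).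
Proof.
  intros Hc.
  assert (L3 : forall x y, l1 <= x <= h1 -> l2 <= y <= h2 -> exists N, forall z, l3 <= z <= h3 ->
     forall x' y', Rabs (x' - x) < / (INR N + 1) -> Rabs (y' - y) < / (INR N + 1) ->
     exists n, (n < N)%nat /\ in_box3 (c n) ((x', y'), z)).
  { intros x y Hx Hy.
    apply (gauge1 l3 h3 (fun z N => forall x' y', Rabs (x' - x) < / (INR N + 1) -> Rabs (y' - y) < / (INR N + 1) ->
     exists n, (n < N)%nat /\ in_box3 (c n) ((x', y'), z))).
    - intros z N N' HNN' H x' y' H1 H2. pose proof (inv_mono _ _ HNN').
      destruct (H x' y') as [n [Hn Hin]]; try lra. exists n; split; auto; lia.
    - intros z Hz. destruct (Hc x y z Hx Hy Hz) as [n0 Hn0].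
      destruct (c n0) as [[[a1 b1] [a2 b2]] [a3 b3]] eqn:Ec. simpl in Hn0. destruct Hn0 as [Hx0 [Hy0 Hz0]].
      destruct (open_int x a1 b1 Hx0) as [d1 [Hd1 Hd1']].
      destruct (open_int y a2 b2 Hy0) as [d2 [Hd2 Hd2']].
      destruct (open_int z a3 b3 Hz0) as [d3 [Hd3 Hd3']].
      destruct (inv_small (Rmin d1 d2)) as [N1 HN1]; [apply Rmin_glb_lt; auto|].
      exists d3, (max N1 (S n0)). split; auto. intros z' Hz' x' y' H1 H2.
      specialize (HN1 (max N1 (S n0)) ltac:(lia)).
      pose proof (Rmin_l d1 d2). pose proof (Rmin_r d1 d2).
      exists n0. split; [lia|]. rewrite Ec. simpl. split; [apply Hd1'|split; [apply Hd2'|apply Hd3']]; lra. }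
  assert (L2 : forall x, l1 <= x <= h1 -> exists N, forall y, l2 <= y <= h2 ->
     forall x', Rabs (x' - x) < / (INR N + 1) -> forall z, l3 <= z <= h3 ->
     exists n, (n < N)%nat /\ in_box3 (c n) ((x', y), z)).
  { intros x Hx.
    apply (gauge1 l2 h2 (fun y N => forall x', Rabs (x' - x) < / (INR N + 1) -> forall z, l3 <= z <= h3 ->
     exists n, (n < N)%nat /\ in_box3 (c n) ((x', y), z))).
    - intros y N N' HNN' H x' H1 z Hz. pose proof (inv_mono _ _ HNN').
      destruct (H x' ltac:(lra) z Hz) as [n [Hn Hin]]. exists n; split; auto; lia.
    - intros y Hy. destruct (L3 x y Hx Hy) as [N3 HN3].
      exists (/ (INR N3 + 1)), N3. split; [apply Rinv_0_lt_compat; pose proof (pos_INR N3); lra|].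
      intros y' Hy' x' Hx' z Hz. apply HN3; auto. }
  destruct (gauge1 l1 h1 (fun x N => forall y z, l2 <= y <= h2 -> l3 <= z <= h3 ->
     exists n, (n < N)%nat /\ in_box3 (c n) ((x, y), z))) as [N HN].
  - intros x N N' HNN' H y z Hy Hz. destruct (H y z Hy Hz) as [n [Hn Hin]]. exists n; split; auto; lia.
  - intros x Hx. destruct (L2 x Hx) as [N2 HN2].
    exists (/ (INR N2 + 1)), N2. split; [apply Rinv_0_lt_compat; pose proof (pos_INR N2); lra|].
    intros x' Hx' y z Hy Hz. apply HN2; auto.
  - exists N. intros x y z Hx Hy Hz. apply HN; auto.
Qed.

Lemma lsum_seq (c : nat -> box3) N : lsum vol_box3 (map c (seq 0 N)) = sumN (fun k => vol_box3 (c k)) N.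
Proof. induction N; auto. rewrite seq_S, map_app, lsum_app, IHN. simpl. lra. Qed.

Lemma inter_le X K : vol_box3 (inter3 X K) <= vol_box3 X.
Proof.
  rewrite !vol3_len. unfold inter3; simpl.
  assert (forall I J, len0 (inter1 I J) <= len0 I).
  { intros I J. unfold len0, inter1; simpl. apply Rmax_lub; [apply Rmax_l|].
    eapply Rle_trans; [|apply Rmax_r]. pose proof (Rmin_l (snd I) (snd J)). pose proof (Rmax_l (fst I) (fst J)). lra. }
  pose proof (len0_nn (inter1 (fst (fst X)) (fst (fst K)))). pose proof (len0_nn (inter1 (snd (fst X)) (snd (fst K)))).
  pose proof (len0_nn (inter1 (snd X) (snd K))).
  apply Rmult_le_compat; try (apply Rmult_le_pos; auto); auto.
  apply Rmult_le_compat; auto.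
Qed.

Lemma mu3_lb l1 h1 l2 h2 l3 h3 (E : pt3 -> Prop) :
  l1 <= h1 -> l2 <= h2 -> l3 <= h3 ->
  (forall x y z, l1 <= x <= h1 -> l2 <= y <= h2 -> l3 <= z <= h3 -> E ((x, y), z)) -> fin3 E ->
  (h1 - l1) * (h2 - l2) * (h3 - l3) <= mu3 E.
Proof.
  intros H1 H2 H3 HE Hf. apply (mu_ge in_box3 vol_box3 vol3_nn); [exact Hf|].
  intros s [c [Hc Hs]].
  destruct (compact3 c l1 h1 l2 h2 l3 h3) as [N HN].
  { intros x y z Hx Hy Hz. apply Hc; auto. }
  set (K := (((l1, h1), (l2, h2)), (l3, h3))).
  assert (vol_box3 K <= lsum (fun B => vol_box3 (inter3 B K)) (map c (seq 0 N))).
  { apply lbound_list. intros [[x y] z] [Hx [Hy Hz]]. simpl in Hx, Hy, Hz.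
    destruct (HN x y z Hx Hy Hz) as [n [Hn Hin]]. exists (c n). split; auto.
    apply in_map_iff. exists n; split; auto. apply in_seq; lia. }
  assert (lsum (fun B => vol_box3 (inter3 B K)) (map c (seq 0 N)) <= lsum vol_box3 (map c (seq 0 N))).
  { apply lsum_le. intros; apply inter_le. }
  rewrite lsum_seq in H0. pose proof (lim_ge_partial _ _ N (fun k => vol3_nn (c k)) Hs).
  assert (vol_box3 K = (h1 - l1) * (h2 - l2) * (h3 - l3)).
  { unfold K, vol_box3. simpl. rewrite !rmax0 by lra. ring. }
  lra.
Qed.

Definition mu2 := mu in_box2 vol_box2.
Definition fin2 := fin in_box2 vol_box2.
Definition e02 : box2 := ((0, 0), (0, 0)).

Lemma vol2_nn b : 0 <= vol_box2 b.
Proof. unfold vol_box2. apply Rmult_le_pos; apply Rmax_l. Qed.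
Lemma vol2_e0 : vol_box2 e02 = 0.
Proof. unfold vol_box2, e02; simpl. rewrite Rminus_diag, Rmax_left; lra. Qed.

Lemma mu2_img_eq F G c c' Y : 0 < c -> c * c' = 1 -> fin2 Y ->
  (forall Z, fin2 Z -> fin2 (img F Z) /\ mu2 (img F Z) <= c * mu2 Z) ->
  (forall Z, fin2 Z -> fin2 (img G Z) /\ mu2 (img G Z) <= c' * mu2 Z) ->
  (forall p, G (F p) = p) -> fin2 (img F Y) /\ mu2 (img F Y) = c * mu2 Y.
Proof.
  intros Hc Hcc HY HF HG Hinv. destruct (HF Y HY) as [H1 H2]. split; auto.
  destruct (HG _ H1) as [_ H3]. rewrite img_img in H3 by auto.
  assert (c * mu2 Y <= c * (c' * mu2 (img F Y))) by (apply Rmult_le_compat_l; lra).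
  replace (c * (c' * mu2 (img F Y))) with (mu2 (img F Y)) in H by (rewrite <- Rmult_assoc, Hcc; ring).
  lra.
Qed.

Definition sc2 (a b : R) (p : pt2) : pt2 := (a * fst p, b * snd p).

Lemma sc2_le a b Y : a <> 0 -> b <> 0 -> fin2 Y ->
  fin2 (img (sc2 a b) Y) /\ mu2 (img (sc2 a b) Y) <= (Rabs a * Rabs b) * mu2 Y.
Proof.
  intros Ha Hb HY.
  apply (box_map in_box2 vol_box2 e02 _ (fun bx => (sI a (fst bx), sI b (snd bx))));
    auto using vol2_nn, vol2_e0.
  - pose proof (Rabs_pos a); pose proof (Rabs_pos b). apply Rmult_le_pos; auto.
  - intros [I1 I2] [x y] H. unfold in_box2 in *. simpl in H |- *. destruct H as [H1 H2].
    split; apply sI_in; auto.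
  - intros [I1 I2]. unfold vol_box2. simpl. rewrite !sI_len. right; ring.
Qed.

Lemma sc2_eq a b Y : a <> 0 -> b <> 0 -> fin2 Y ->
  fin2 (img (sc2 a b) Y) /\ mu2 (img (sc2 a b) Y) = (Rabs a * Rabs b) * mu2 Y.
Proof.
  intros Ha Hb HY.
  apply (mu2_img_eq _ (sc2 (/a) (/b)) _ (Rabs (/a) * Rabs (/b))); auto.
  - pose proof (Rabs_pos_lt a Ha); pose proof (Rabs_pos_lt b Hb). apply Rmult_lt_0_compat; auto.
  - rewrite !Rabs_inv. field. split; apply Rabs_no_R0; auto.
  - intros Z HZ; apply sc2_le; auto.
  - intros Z HZ; apply sc2_le; auto; apply Rinv_neq_0_compat; auto.
  - intros [x y]. unfold sc2; simpl. f_equal; field; auto.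
Qed.

Definition shx (g : R -> R) (p : pt2) : pt2 := (fst p + g (snd p), snd p).

Lemma shx_le g K Y : 0 <= K -> LipR K g -> fin2 Y -> fin2 (img (shx g) Y) /\ mu2 (img (shx g) Y) <= mu2 Y.
Proof.
  intros HK Hg HY. replace (mu2 Y) with (1 * mu2 Y) by ring.
  apply (image_bound in_box2 vol_box2 vol2_nn e02 vol2_e0); auto; [lra|].
  intros b eps He. destruct b as [[a1 b1] [a2 b2]].
  destruct (Rlt_dec a1 b1) as [H1|H1]; [destruct (Rlt_dec a2 b2) as [H2|H2]|];
  try (exists nil; split; [intros [x y] Hp; unfold in_box2 in Hp; simpl in Hp; lra|
     change (lsum vol_box2 nil) with 0; pose proof (vol2_nn ((a1, b1), (a2, b2))); lra]).
  set (L1 := b1 - a1). set (L2 := b2 - a2).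
  destruct (small_g (L1 * L2) (eps / 2)) as [g0 [Hg0 Hg2]];
    [unfold L1, L2; apply Rmult_le_pos; lra|lra|].
  destruct (big_nat (4 * (K * L2 * L2)) (eps / 2)) as [k [Hk Hk2]]; [lra|].
  destruct (subdiv1 a2 b2 k g0 H2 Hk (proj1 Hg0)) as [l2 [Hl2a [Hl2b Hl2c]]].
  set (h := (b2 - a2) * (1 + g0) / INR k).
  assert (Hk0 : 0 < INR k) by (apply lt_0_INR; lia).
  assert (Hh : 0 < h) by (unfold h; apply Rdiv_lt_0_compat; nra).
  exists (map (fun J => ((a1 + g (mid J) - K * h / 2, b1 + g (mid J) + K * h / 2), J)) l2).
  split.
  - intros [x y] Hp _. unfold in_box2 in Hp; simpl in Hp. destruct Hp as [Hx Hy].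
    destruct (Hl2b y Hy) as [J [HJ HyJ]].
    eexists. split.
    + apply in_map_iff. exists J. split; [reflexivity|auto].
    + unfold shx, in_box2; simpl. pose proof (Hl2c J HJ) as E. unfold len in E. fold h in E.
      specialize (Hg y (mid J)). unfold mid in *.
      assert (Rabs (y - (fst J + snd J) / 2) <= h / 2) by (apply abs_le; lra).
      assert (Hgd : Rabs (g y - g ((fst J + snd J) / 2)) <= K * h / 2).
      { eapply Rle_trans; [apply Hg|]. nra. }
      apply abs_le_inv in Hgd. repeat split; lra.
  - rewrite lsum_map.
    rewrite (lsum_const _ l2 ((L1 + K * h) * h)).
    2:{ intros J HJ. unfold vol_box2; simpl. pose proof (Hl2c J HJ) as E. unfold len in E. fold h in E.
        rewrite E. rewrite !rmax0 by (unfold L1 in *; nra). replace (b1 + g (mid J) + K * h / 2 - (a1 + g (mid J) - K * h / 2)) with (L1 + K * h) by (unfold L1; field). reflexivity. }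
    rewrite Hl2a. unfold h. fold L2.
    replace (INR k * ((L1 + K * (L2 * (1 + g0) / INR k)) * (L2 * (1 + g0) / INR k)))
      with (L1 * L2 * (1 + g0) + (K * L2 * L2) * ((1 + g0) * (1 + g0)) / INR k) by (field; lra).
    assert (HV : 0 <= L1 * L2) by (unfold L1, L2; apply Rmult_le_pos; lra).
    assert (HW : 0 <= K * L2 * L2) by (unfold L2; repeat apply Rmult_le_pos; lra).
    assert ((K * L2 * L2) * ((1 + g0) * (1 + g0)) / INR k <= 4 * (K * L2 * L2) / INR k).
    { unfold Rdiv. apply Rmult_le_compat_r; [left; apply Rinv_0_lt_compat; auto|].
      assert ((1+g0)*(1+g0) <= 4) by (destruct Hg0; nra). nra. }
    assert (L1 * L2 * (1 + g0) = L1 * L2 + g0 * (L1 * L2)) by ring.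
    assert (g0 * (L1 * L2) <= eps / 2) by (destruct Hg0; nra).
    unfold vol_box2; simpl. rewrite !rmax0 by lra. fold L1 L2. lra.
Qed.

Lemma shx_eq g K Y : 0 <= K -> LipR K g -> fin2 Y -> fin2 (img (shx g) Y) /\ mu2 (img (shx g) Y) = mu2 Y.
Proof.
  intros HK Hg HY. replace (mu2 Y) with (1 * mu2 Y) by ring.
  apply (mu2_img_eq _ (shx (fun x => - g x)) 1 1); auto; try lra.
  - intros Z HZ. rewrite Rmult_1_l. apply (shx_le g K); auto.
  - intros Z HZ. rewrite Rmult_1_l. apply (shx_le _ K); auto.
    intros x y. replace (- g x - - g y) with (- (g x - g y)) by ring. rewrite Rabs_Ropp. apply Hg.
  - intros [x y]. unfold shx; simpl. f_equal. ring.
Qed.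

Definition Sub (E : region) (f : pt2 -> R) : pt3 -> Prop := fun p => E (fst p) /\ 0 < snd p < f (fst p).
Definition W E f := mu3 (Sub E f).
Definition Sq (R0 : R) (E : region) := forall p, E p -> Rabs (fst p) <= R0 /\ Rabs (snd p) <= R0.
Definition LipOn (R0 K : R) (f : pt2 -> R) := forall x y,
  Rabs (fst x) <= R0 -> Rabs (snd x) <= R0 -> Rabs (fst y) <= R0 -> Rabs (snd y) <= R0 ->
  Rabs (f x - f y) <= K * (Rabs (fst x - fst y) + Rabs (snd x - snd y)).

Definition Slab (E : region) a b : pt3 -> Prop := fun p => E (fst p) /\ a < snd p < b.

Lemma slab_bound R0 E a b : 0 <= R0 -> a <= b -> Sq R0 E -> fin3 (Slab E a b) /\ mu3 (Slab E a b) <= (2 * R0 + 2) * (2 * R0 + 2) * (b - a).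
Proof.
  intros HR Hab HE. destruct (box_cover in_box3 vol_box3 vol3_nn e03 vol3_e0 (Slab E a b) (((- R0 - 1, R0 + 1), (- R0 - 1, R0 + 1)), (a, b))) as [H1 H2].
  - unfold Slab. intros [[x y] t] [Ep Ht]. simpl in *. destruct (HE _ Ep) as [Hx Hy]. simpl in Hx, Hy.
    apply abs_le_inv in Hx; apply abs_le_inv in Hy. repeat split; lra.
  - split; auto. unfold vol_box3 in H2; simpl in H2. rewrite !rmax0 in H2 by lra.
    unfold mu3. replace (R0 + 1 - (- R0 - 1)) with (2 * R0 + 2) in H2 by ring. auto.
Qed.

Lemma sub_bound R0 E f C : 0 <= R0 -> 0 <= C -> Sq R0 E -> (forall p, E p -> f p <= C) -> fin3 (Sub E f).
Proof.
  intros HR HC HE Hf. destruct (slab_bound R0 E 0 (C + 1) HR ltac:(lra) HE) as [H1 _].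
  apply (mu_mono in_box3 vol_box3 vol3_nn (Sub E f) (Slab E 0 (C + 1))); auto.
  unfold Sub, Slab; intros p [Ep Ht]; split; auto; specialize (Hf _ Ep); lra.
Qed.

Definition clamp (R0 x : R) := Rmax (- R0) (Rmin R0 x).
Definition clampf R0 (f : pt2 -> R) : pt2 -> R := fun p => f (clamp R0 (fst p), clamp R0 (snd p)).

Lemma clamp_abs R0 x : 0 <= R0 -> Rabs (clamp R0 x) <= R0.
Proof. intros H. apply abs_le. unfold clamp, Rmin. destruct (Rle_dec R0 x); unfold Rmax;
  repeat match goal with |- context [Rle_dec ?a ?b] => destruct (Rle_dec a b) end; lra. Qed.

Lemma clamp_id R0 x : Rabs x <= R0 -> clamp R0 x = x.
Proof. intros H. apply abs_le_inv in H. unfold clamp, Rmin. destruct (Rle_dec R0 x); unfold Rmax;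
  repeat match goal with |- context [Rle_dec ?a ?b] => destruct (Rle_dec a b) end; lra. Qed.

Lemma clamp_lip R0 x y : Rabs (clamp R0 x - clamp R0 y) <= Rabs (x - y).
Proof. unfold clamp, Rmin.
  destruct (Rle_dec R0 x), (Rle_dec R0 y); unfold Rmax;
  repeat match goal with |- context [Rle_dec ?a ?b] => destruct (Rle_dec a b) end;
  unfold Rabs; repeat match goal with |- context [Rcase_abs ?a] => destruct (Rcase_abs a) end; lra.
Qed.

Lemma clampf_lip R0 K f : 0 <= R0 -> 0 <= K -> LipOn R0 K f -> Lip K (clampf R0 f).
Proof.
  intros HR HK Hf x y. unfold clampf. eapply Rle_trans; [apply Hf; apply clamp_abs; auto|].
  simpl. apply Rmult_le_compat_l; auto. pose proof (clamp_lip R0 (fst x) (fst y)). pose proof (clamp_lip R0 (snd x) (snd y)). lra.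
Qed.

Lemma clampf_id R0 f p : Rabs (fst p) <= R0 -> Rabs (snd p) <= R0 -> clampf R0 f p = f p.
Proof. intros H1 H2. unfold clampf. rewrite !clamp_id by auto. destruct p; auto. Qed.

Lemma lipon_bound R0 K f p : 0 <= R0 -> 0 <= K -> LipOn R0 K f -> Rabs (fst p) <= R0 -> Rabs (snd p) <= R0 ->
  f p <= Rabs (f (0, 0)) + K * (2 * R0).
Proof.
  intros HR HK0 Hf H1 H2. assert (HK : Rabs (f p - f (0, 0)) <= K * (Rabs (fst p - 0) + Rabs (snd p - 0))).
  { apply Hf; simpl; auto; rewrite Rabs_R0; auto. }
  rewrite !Rminus_0_r in HK. apply abs_le_inv in HK. pose proof (Rle_abs (f (0, 0))).
  assert (K * (Rabs (fst p) + Rabs (snd p)) <= K * (2 * R0)) by (apply Rmult_le_compat_l; lra). lra.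
Qed.

Lemma W_add R0 K E f g : 0 <= R0 -> 0 <= K -> Sq R0 E -> LipOn R0 K f -> LipOn R0 K g ->
  (forall p, E p -> 0 <= f p) -> (forall p, E p -> 0 <= g p) ->
  W E (fun p => f p + g p) = W E f + W E g.
Proof.
  intros HR HK HE Hf Hg Hf0 Hg0.
  set (Cf := Rabs (f (0, 0)) + K * (2 * R0)). set (Cg := Rabs (g (0, 0)) + K * (2 * R0)).
  assert (Cf0 : 0 <= Cf) by (unfold Cf; pose proof (Rabs_pos (f (0,0))); nra).
  assert (Cg0 : 0 <= Cg) by (unfold Cg; pose proof (Rabs_pos (g (0,0))); nra).
  assert (Hfb : forall p, E p -> f p <= Cf) by (intros p Ep; destruct (HE p Ep); apply lipon_bound; auto).
  assert (Hgb : forall p, E p -> g p <= Cg) by (intros p Ep; destruct (HE p Ep); apply lipon_bound; auto).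
  assert (Ff : fin3 (Sub E f)) by (apply (sub_bound R0 E f Cf); auto).
  assert (Fg : fin3 (Sub E g)) by (apply (sub_bound R0 E g Cg); auto).
  assert (Ffg : fin3 (Sub E (fun p => f p + g p))).
  { apply (sub_bound R0 E _ (Cf + Cg)); auto; [lra|]. intros p Ep. specialize (Hfb p Ep). specialize (Hgb p Ep). lra. }
  set (A0 := (2 * R0 + 2) * (2 * R0 + 2)).
  assert (HA0 : 0 <= A0) by (unfold A0; nra).
  set (F := tsh (clampf R0 f)). set (F' := tsh (fun p => - clampf R0 f p)).
  assert (LF : Lip K (clampf R0 f)) by (apply clampf_lip; auto).
  assert (LF' : Lip K (fun p => - clampf R0 f p)).
  { intros x y. replace (- clampf R0 f x - - clampf R0 f y) with (- (clampf R0 f x - clampf R0 f y)) by ring.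
    rewrite Rabs_Ropp; apply LF. }
  assert (Hcl : forall p, E p -> clampf R0 f p = f p) by (intros p Ep; destruct (HE p Ep); apply clampf_id; auto).
  apply Rle_antisym.
  -
    apply le_epsilon. intros z0 Hz0. set (z := z0 / (2 * A0 + 1)).
    assert (Hz : 0 < z) by (unfold z; apply Rdiv_lt_0_compat; lra).
    assert (Hzz : A0 * (z - - z) <= z0).
    { unfold z. replace (A0 * (z0 / (2 * A0 + 1) - - (z0 / (2 * A0 + 1)))) with (z0 * (2 * A0 / (2 * A0 + 1))) by (field; lra).
      assert (2 * A0 / (2 * A0 + 1) <= 1). { apply Rmult_le_reg_r with (2 * A0 + 1); [lra|]. unfold Rdiv. rewrite Rmult_assoc, Rinv_l; lra. }
      nra. }
    set (Z' := fun p : pt3 => E (fst p) /\ - z < snd p < g (fst p)).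
    destruct (slab_bound R0 E (- z) z HR ltac:(lra) HE) as [FS1 MS1].
    assert (HZ' : fin3 Z' /\ mu3 Z' <= W E g + A0 * (z - - z)).
    { destruct (subadd2 in_box3 vol_box3 vol3_nn e03 vol3_e0 Z' (Sub E g) (Slab E (- z) z) Fg FS1).
      - unfold Z', Sub, Slab. intros p [Ep Hp]. destruct (Rlt_dec 0 (snd p)); [left; split; auto; split; lra|right; split; auto; split; lra].
      - split; auto. unfold W, mu3 in *. unfold A0. lra. }
    destruct HZ' as [FZ MZ].
    destruct (tsh_le _ K Z' HK LF FZ) as [FI MI].
    destruct (subadd2 in_box3 vol_box3 vol3_nn e03 vol3_e0 (Sub E (fun p => f p + g p)) (Sub E f) (img F Z') Ff FI) as [_ Hle].
    + unfold Sub at 1. intros [x t] [Ex Ht]. simpl in *. destruct (Rlt_dec t (f x)); [left; split; auto; simpl; split; auto; lra|right].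
      exists (x, t - f x). split; [unfold Z'; split; simpl; auto; split; lra|].
      unfold F, tsh; simpl. rewrite Hcl by auto. f_equal; ring.
    + unfold W, mu3, F in *. lra.
  -
    apply le_epsilon. intros eta0 He0. set (eta := eta0 / (6 * A0 + 1)).
    assert (He : 0 < eta) by (unfold eta; apply Rdiv_lt_0_compat; lra).
    assert (Hee : A0 * (eta - - 2 * eta) + A0 * (2 * eta - - eta) <= eta0).
    { unfold eta. replace (A0 * (eta0 / (6 * A0 + 1) - - 2 * (eta0 / (6 * A0 + 1))) + A0 * (2 * (eta0 / (6 * A0 + 1)) - - (eta0 / (6 * A0 + 1)))) with (eta0 * (6 * A0 / (6 * A0 + 1))) by (field; lra).
      assert (6 * A0 / (6 * A0 + 1) <= 1). { apply Rmult_le_reg_r with (6 * A0 + 1); [lra|]. unfold Rdiv. rewrite Rmult_assoc, Rinv_l; lra. }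
      nra. }
    set (r := 2 * eta / (2 * K + 1)).
    assert (Hr : 0 < r) by (unfold r; apply Rdiv_lt_0_compat; lra).
    set (A := fun p : pt3 => E (fst p) /\ 0 < snd p < f (fst p) - eta).
    set (B := fun p : pt3 => E (fst p) /\ f (fst p) + eta < snd p < f (fst p) + g (fst p)).
    assert (HAB : fin3 (fun p => A p \/ B p) /\ mu3 (fun p => A p \/ B p) <= W E (fun p => f p + g p)).
    { apply (mu_mono in_box3 vol_box3 vol3_nn); auto.
      unfold A, B, Sub. intros p [[Ep Hp]|[Ep Hp]]; split; auto; specialize (Hf0 _ Ep); specialize (Hg0 _ Ep); lra. }
    destruct HAB as [FAB MAB].
    destruct (separation3 A B r Hr) as [FA [FB MS]]; auto.
    { unfold A, B, close3. intros [x t] [y s] [Ex Ht] [Ey Hs] [H1 [H2 H3]]. simpl in *.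
      destruct (HE x Ex) as [Hx1 Hx2]. destruct (HE y Ey) as [Hy1 Hy2].
      specialize (Hf x y Hx1 Hx2 Hy1 Hy2).
      assert (K * (Rabs (fst x - fst y) + Rabs (snd x - snd y)) <= K * (2 * r)) by (apply Rmult_le_compat_l; lra).
      apply abs_le_inv in Hf. apply abs_lt_inv in H3.
      assert (r * (2 * K + 1) = 2 * eta) by (unfold r; field; lra). nra. }
    destruct (slab_bound R0 E (- 2 * eta) eta HR ltac:(lra) HE) as [FS2 MS2].
    destruct (tsh_le _ K _ HK LF FS2) as [FI2 MI2].
    destruct (subadd2 in_box3 vol_box3 vol3_nn e03 vol3_e0 (Sub E f) A (img F (Slab E (- 2 * eta) eta)) FA FI2) as [_ Hf1].
    { unfold Sub. intros [x t] [Ex Ht]. simpl in *. destruct (Rlt_dec t (f x - eta)); [left; unfold A; split; auto; simpl; split; lra|right].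
      exists (x, t - f x). split; [unfold Slab; split; simpl; auto; split; lra|].
      unfold F, tsh; simpl. rewrite Hcl by auto. f_equal; ring. }
    destruct (slab_bound R0 E (- eta) (2 * eta) HR ltac:(lra) HE) as [FS3 MS3].
    destruct (tsh_le _ K B HK LF' FB) as [FI3 MI3].
    destruct (subadd2 in_box3 vol_box3 vol3_nn e03 vol3_e0 (Sub E g) (img F' B) (Slab E (- eta) (2 * eta)) FI3 FS3) as [_ Hg1].
    { unfold Sub. intros [x t] [Ex Ht]. simpl in *. destruct (Rlt_dec eta t); [left|right; unfold Slab; split; auto; simpl; split; lra].
      exists (x, t + f x). split; [unfold B; split; simpl; auto; split; lra|].
      unfold F', tsh; simpl. rewrite Hcl by auto. f_equal; ring. }
    unfold W, mu3, F, F' in *. fold A0 in MS2, MS3. lra.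
Qed.

Lemma W_ext E f g : (forall x, E x -> f x = g x) -> W E f = W E g.
Proof. intros H. unfold W. f_equal. apply pred_ext. intros [x t]. unfold Sub; simpl.
  split; intros [Ex Ht]; split; auto; [rewrite <- H|rewrite H]; auto. Qed.

Lemma W_scale E f c : 0 < c -> fin3 (Sub E f) -> W E (fun x => c * f x) = c * W E f.
Proof.
  intros Hc HF. unfold W.
  assert (Sub E (fun x => c * f x) = img (sc 1 1 c) (Sub E f)).
  { apply pred_ext. intros [[x y] t]. unfold Sub, img, sc; simpl. split.
    - intros [Ex Ht]. exists ((x, y), t / c). simpl. split; [split; auto|].
      + split; [apply Rdiv_lt_0_compat; lra|]. apply Rmult_lt_reg_l with c; auto.
        unfold Rdiv. replace (c * (t * / c)) with t by (field; lra). lra.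
      + f_equal; [f_equal; ring|field; lra].
    - intros [[[x' y'] t'] [[Ex Ht] Heq]]. simpl in *. inversion Heq; subst.
      rewrite !Rmult_1_l. split; auto. split; [nra|]. apply Rmult_lt_compat_l; lra. }
  rewrite H. destruct (sc_eq 1 1 c (Sub E f)) as [_ E1]; try lra; auto.
  rewrite E1. rewrite Rabs_R1, Rabs_right by lra. ring.
Qed.

Lemma W_inv E f L Li : (forall p, E p <-> E (L p)) -> (forall y, L (Li y) = y) ->
  (forall Y, fin3 Y -> fin3 (img (fun p : pt3 => (L (fst p), snd p)) Y) /\
     mu3 (img (fun p : pt3 => (L (fst p), snd p)) Y) = mu3 Y) ->
  fin3 (Sub E (fun p => f (L p))) -> W E (fun p => f (L p)) = W E f.
Proof.
  intros HE HL Hm HF. unfold W.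
  assert (Sub E f = img (fun p : pt3 => (L (fst p), snd p)) (Sub E (fun p => f (L p)))).
  { apply pred_ext. intros [y t]. unfold Sub, img; simpl. split.
    - intros [Ey Ht]. exists (Li y, t). simpl. split; [split|].
      + apply HE. rewrite HL; auto.
      + rewrite HL; auto.
      + rewrite HL; auto.
    - intros [[x t'] [[Ex Ht] Heq]]. simpl in *. inversion Heq; subst. exact (conj (proj1 (HE x) Ex) Ht). }
  rewrite H. symmetry. apply Hm; auto.
Qed.

Lemma rot_comp a b p : rot a (rot b p) = rot (a + b) p.
Proof. unfold rot; simpl. rewrite cos_plus, sin_plus. f_equal; ring. Qed.

Lemma rot_0 p : rot 0 p = p.
Proof. unfold rot. rewrite cos_0, sin_0. destruct p; simpl; f_equal; ring. Qed.

Lemma rot_PI p : rot PI p = (- fst p, - snd p).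
Proof. unfold rot. rewrite cos_PI, sin_PI. f_equal; ring. Qed.

Lemma rot_as_shears th p : sin th <> 0 ->
  (rot th (fst p), snd p) =
  sh1 (fun y => - ((1 - cos th) / sin th) * y) (sh2 (fun x => sin th * x) (sh1 (fun y => - ((1 - cos th) / sin th) * y) p)).
Proof.
  intros Hs. destruct p as [[x y] t]. unfold rot, sh1, sh2; simpl.
  pose proof (sin2_cos2 th) as Hsc. unfold Rsqr in Hsc.
  set (u := - ((1 - cos th) / sin th)).
  assert (Hus : u * sin th = cos th - 1) by (unfold u; field; auto).
  assert (Hu1 : u * (1 + cos th) = - sin th).
  { unfold u. apply Rmult_eq_reg_r with (sin th); auto.
    replace (- ((1 - cos th) / sin th) * (1 + cos th) * sin th) with (- (1 - cos th * cos th)) by (field; auto).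
    lra. }
  f_equal. f_equal.
  - replace (x + u * y + u * (y + sin th * (x + u * y))) with (x * (1 + u * sin th) + y * (u * (2 + u * sin th))) by ring.
    rewrite Hus. replace (u * (2 + (cos th - 1))) with (u * (1 + cos th)) by ring. rewrite Hu1. ring.
  - replace (y + sin th * (x + u * y)) with (sin th * x + y * (1 + u * sin th)) by ring. rewrite Hus. ring.
Qed.

Lemma lin_lipR c : LipR (Rabs c) (fun y => c * y).
Proof. intros x y. rewrite <- Rmult_minus_distr_l, Rabs_mult. lra. Qed.

Lemma rot_mu th Y : sin th <> 0 -> fin3 Y ->
  fin3 (img (fun p : pt3 => (rot th (fst p), snd p)) Y) /\ mu3 (img (fun p : pt3 => (rot th (fst p), snd p)) Y) = mu3 Y.
Proof.
  intros Hs HY. set (u := - ((1 - cos th) / sin th)).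
  rewrite (img_ext _ (fun p => sh1 (fun y => u * y) (sh2 (fun x => sin th * x) (sh1 (fun y => u * y) p)))).
  2:{ intros p _. apply rot_as_shears; auto. }
  assert (Ei : img (fun p => sh1 (fun y => u * y) (sh2 (fun x => sin th * x) (sh1 (fun y => u * y) p))) Y =
     img (sh1 (fun y => u * y)) (img (sh2 (fun x => sin th * x)) (img (sh1 (fun y => u * y)) Y))).
  { rewrite !img_comp. reflexivity. }
  rewrite Ei.
  destruct (sh1_eq (fun y => u * y) (Rabs u) Y (Rabs_pos u) (lin_lipR u) HY) as [F1 E1].
  destruct (sh2_eq (fun x => sin th * x) (Rabs (sin th)) _ (Rabs_pos _) (lin_lipR _) F1) as [F2 E2].
  destruct (sh1_eq (fun y => u * y) (Rabs u) _ (Rabs_pos u) (lin_lipR u) F2) as [F3 E3].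
  split; auto. lra.
Qed.

Lemma neg_mu Y : fin3 Y ->
  fin3 (img (fun p : pt3 => ((- fst (fst p), - snd (fst p)), snd p)) Y) /\
  mu3 (img (fun p : pt3 => ((- fst (fst p), - snd (fst p)), snd p)) Y) = mu3 Y.
Proof.
  intros HY. rewrite (img_ext _ (sc (-1) (-1) 1)).
  2:{ intros [[x y] t] _. unfold sc; simpl. f_equal; [f_equal|]; ring. }
  destruct (sc_eq (-1) (-1) 1 Y) as [F E]; try lra; auto. split; auto. rewrite E.
  assert (Hm : Rabs (-1) = 1) by (unfold Rabs; destruct (Rcase_abs (-1)); lra). rewrite Hm, Rabs_R1. ring.
Qed.

Definition Bnd (R0 U : R) (f : pt2 -> R) := forall x, Rabs (fst x) <= R0 -> Rabs (snd x) <= R0 -> Rabs (f x) <= U.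
Definition LipB R0 K U f := 0 <= K /\ 0 <= U /\ LipOn R0 K f /\ Bnd R0 U f.

Lemma dist_nn (x y : pt2) : 0 <= Rabs (fst x - fst y) + Rabs (snd x - snd y).
Proof. pose proof (Rabs_pos (fst x - fst y)); pose proof (Rabs_pos (snd x - snd y)); lra. Qed.

Lemma LipOn_mono R0 K K' f : K <= K' -> LipOn R0 K f -> LipOn R0 K' f.
Proof. intros HK Hf x y H1 H2 H3 H4. eapply Rle_trans; [apply Hf; auto|].
  apply Rmult_le_compat_r; auto. apply dist_nn. Qed.

Lemma LipB_add R0 K1 U1 f K2 U2 g : LipB R0 K1 U1 f -> LipB R0 K2 U2 g -> LipB R0 (K1 + K2) (U1 + U2) (fun p => f p + g p).
Proof.
  intros [Hk1 [Hu1 [Hf Bf]]] [Hk2 [Hu2 [Hg Bg]]]. split; [lra|split; [lra|split]].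
  - intros x y H1 H2 H3 H4. specialize (Hf x y H1 H2 H3 H4). specialize (Hg x y H1 H2 H3 H4).
    replace (f x + g x - (f y + g y)) with ((f x - f y) + (g x - g y)) by ring.
    eapply Rle_trans; [apply Rabs_triang|]. lra.
  - intros x H1 H2. specialize (Bf x H1 H2). specialize (Bg x H1 H2).
    eapply Rle_trans; [apply Rabs_triang|]. lra.
Qed.

Lemma LipB_scal R0 K U f c : LipB R0 K U f -> LipB R0 (Rabs c * K) (Rabs c * U) (fun p => c * f p).
Proof.
  intros [Hk [Hu [Hf Bf]]]. pose proof (Rabs_pos c). split; [nra|split; [nra|split]].
  - intros x y H1 H2 H3 H4. rewrite <- Rmult_minus_distr_l, Rabs_mult, Rmult_assoc.
    apply Rmult_le_compat_l; auto.
  - intros x H1 H2. rewrite Rabs_mult. apply Rmult_le_compat_l; auto.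
Qed.

Lemma LipB_mul R0 K1 U1 f K2 U2 g : LipB R0 K1 U1 f -> LipB R0 K2 U2 g ->
  LipB R0 (U1 * K2 + U2 * K1) (U1 * U2) (fun p => f p * g p).
Proof.
  intros [Hk1 [Hu1 [Hf Bf]]] [Hk2 [Hu2 [Hg Bg]]]. split; [nra|split; [nra|split]].
  - intros x y H1 H2 H3 H4. specialize (Hf x y H1 H2 H3 H4). specialize (Hg x y H1 H2 H3 H4).
    pose proof (Bf x H1 H2). pose proof (Bg y H3 H4). pose proof (dist_nn x y).
    replace (f x * g x - f y * g y) with (f x * (g x - g y) + g y * (f x - f y)) by ring.
    eapply Rle_trans; [apply Rabs_triang|]. rewrite !Rabs_mult.
    assert (Rabs (f x) * Rabs (g x - g y) <= U1 * (K2 * (Rabs (fst x - fst y) + Rabs (snd x - snd y)))).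
    { apply Rmult_le_compat; auto; apply Rabs_pos. }
    assert (Rabs (g y) * Rabs (f x - f y) <= U2 * (K1 * (Rabs (fst x - fst y) + Rabs (snd x - snd y)))).
    { apply Rmult_le_compat; auto; apply Rabs_pos. }
    nra.
  - intros x H1 H2. rewrite Rabs_mult. apply Rmult_le_compat; auto; apply Rabs_pos.
Qed.

Lemma LipB_fst R0 : 0 <= R0 -> LipB R0 1 R0 fst.
Proof. intros H. split; [lra|split; [lra|split]].
  - intros x y _ _ _ _. pose proof (Rabs_pos (snd x - snd y)). lra.
  - intros x H1 _. auto. Qed.
Lemma LipB_snd R0 : 0 <= R0 -> LipB R0 1 R0 snd.
Proof. intros H. split; [lra|split; [lra|split]].
  - intros x y _ _ _ _. pose proof (Rabs_pos (fst x - fst y)). lra.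
  - intros x _ H2. auto. Qed.

Lemma abs_cs_bound (c s u v : R) : Rabs c <= 1 -> Rabs s <= 1 -> Rabs (c * u - s * v) <= Rabs u + Rabs v.
Proof. intros Hc Hs. eapply Rle_trans; [apply Rabs_triang|]. rewrite Rabs_Ropp, !Rabs_mult.
  pose proof (Rabs_pos u); pose proof (Rabs_pos v); pose proof (Rabs_pos c); pose proof (Rabs_pos s). nra. Qed.
Lemma abs_cs_bound2 (c s u v : R) : Rabs c <= 1 -> Rabs s <= 1 -> Rabs (s * u + c * v) <= Rabs u + Rabs v.
Proof. intros Hc Hs. eapply Rle_trans; [apply Rabs_triang|]. rewrite !Rabs_mult.
  pose proof (Rabs_pos u); pose proof (Rabs_pos v); pose proof (Rabs_pos c); pose proof (Rabs_pos s). nra. Qed.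

Lemma abs_cos x : Rabs (cos x) <= 1.
Proof. apply abs_le. pose proof (COS_bound x). lra. Qed.
Lemma abs_sin x : Rabs (sin x) <= 1.
Proof. apply abs_le. pose proof (SIN_bound x). lra. Qed.

Lemma LipB_rot R0 K U f phi : 0 <= R0 -> LipB (2 * R0) K U f -> LipB R0 (2 * K) U (fun p => f (rot phi p)).
Proof.
  intros HR [Hk [Hu [Hf Bf]]]. split; [lra|split; [lra|split]].
  - intros x y H1 H2 H3 H4. unfold rot.
    eapply Rle_trans; [apply Hf; simpl|]; try (eapply Rle_trans; [apply abs_cs_bound || apply abs_cs_bound2; auto using abs_cos, abs_sin|lra]).
    simpl.
    replace (cos phi * fst x - sin phi * snd x - (cos phi * fst y - sin phi * snd y)) with
      (cos phi * (fst x - fst y) - sin phi * (snd x - snd y)) by ring.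
    replace (sin phi * fst x + cos phi * snd x - (sin phi * fst y + cos phi * snd y)) with
      (sin phi * (fst x - fst y) + cos phi * (snd x - snd y)) by ring.
    pose proof (abs_cs_bound (cos phi) (sin phi) (fst x - fst y) (snd x - snd y) (abs_cos _) (abs_sin _)).
    pose proof (abs_cs_bound2 (cos phi) (sin phi) (fst x - fst y) (snd x - snd y) (abs_cos _) (abs_sin _)).
    pose proof (dist_nn x y). nra.
  - intros x H1 H2. unfold rot. apply Bf; simpl.
    + eapply Rle_trans; [apply abs_cs_bound; auto using abs_cos, abs_sin|lra].
    + eapply Rle_trans; [apply abs_cs_bound2; auto using abs_cos, abs_sin|lra].
Qed.

Lemma LipB_neg R0 K U f : LipB R0 K U f -> LipB R0 K U (fun p => f (- fst p, - snd p)).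
Proof.
  intros [Hk [Hu [Hf Bf]]]. split; [lra|split; [lra|split]].
  - intros x y H1 H2 H3 H4. eapply Rle_trans; [apply Hf; simpl; rewrite ?Rabs_Ropp; auto|].
    simpl. replace (- fst x - - fst y) with (- (fst x - fst y)) by ring.
    replace (- snd x - - snd y) with (- (snd x - snd y)) by ring. rewrite !Rabs_Ropp. lra.
  - intros x H1 H2. apply Bf; simpl; rewrite Rabs_Ropp; auto.
Qed.

Lemma LipB_mono R0 K U f K' U' : K <= K' -> U <= U' -> LipB R0 K U f -> LipB R0 K' U' f.
Proof.
  intros HK HU [Hk [Hu [Hf Bf]]]. split; [lra|split; [lra|split]].
  - eapply LipOn_mono; eauto.
  - intros x H1 H2. eapply Rle_trans; [apply Bf|]; auto.
Qed.

Lemma LipB_R0 R0 R1 K U f : R0 <= R1 -> LipB R1 K U f -> LipB R0 K U f.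
Proof.
  intros HR [Hk [Hu [Hf Bf]]]. split; [lra|split; [lra|split]].
  - intros x y H1 H2 H3 H4. apply Hf; lra.
  - intros x H1 H2. apply Bf; lra.
Qed.

Lemma W_zero E : W E (fun _ => 0) = 0.
Proof.
  unfold W. assert (Sub E (fun _ => 0) = (fun _ => False)).
  { apply pred_ext. intros p; unfold Sub; split; [intros [_ H]; lra|intros []]. }
  rewrite H. destruct (empty_mu in_box3 vol_box3 vol3_nn e03 vol3_e0) as [H1 H2].
  pose proof (mu_nn in_box3 vol_box3 vol3_nn _ H1). unfold mu3. lra.
Qed.

Lemma LipB_sumN R0 K U (F : nat -> pt2 -> R) n : 0 <= K -> 0 <= U -> (forall k, LipB R0 K U (F k)) ->
  LipB R0 (INR n * K) (INR n * U) (fun x => sumN (fun k => F k x) n).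
Proof.
  intros HK HU HF. induction n.
  - simpl. split; [lra|split; [lra|split]].
    + intros x y _ _ _ _. rewrite Rminus_0_r, Rabs_R0. pose proof (dist_nn x y). lra.
    + intros x _ _. rewrite Rabs_R0. lra.
  - rewrite S_INR. replace ((INR n + 1) * K) with (INR n * K + K) by ring.
    replace ((INR n + 1) * U) with (INR n * U + U) by ring.
    apply (LipB_add R0 _ _ (fun x => sumN (fun k => F k x) n) K U (F n)); auto.
Qed.

Lemma W_sum R0 K U E (F : nat -> pt2 -> R) n : 0 <= R0 -> 0 <= K -> 0 <= U -> Sq R0 E ->
  (forall k, LipB R0 K U (F k)) -> (forall k x, E x -> 0 <= F k x) ->
  W E (fun x => sumN (fun k => F k x) n) = sumN (fun k => W E (F k)) n.
Proof.
  intros HR HK HU HE HF H0. induction n.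
  - simpl. apply W_zero.
  - change (sumN (fun k => W E (F k)) (S n)) with (sumN (fun k => W E (F k)) n + W E (F n)).
    rewrite <- IHn.
    change (fun x => sumN (fun k => F k x) (S n)) with (fun x => sumN (fun k => F k x) n + F n x).
    destruct (LipB_sumN R0 K U F n HK HU HF) as [_ [_ [Hl _]]].
    destruct (HF n) as [_ [_ [Hl2 _]]].
    apply (W_add R0 (INR n * K + K)); auto.
    + pose proof (pos_INR n). nra.
    + eapply LipOn_mono; [|apply Hl]. lra.
    + eapply LipOn_mono; [|apply Hl2]. pose proof (pos_INR n). nra.
    + intros p Ep. apply sumN_nn. intros k. apply H0; auto.
Qed.

Lemma telescope (h : nat -> R) n : sumN (fun k => h (S k) - h k) n = h n - h O.
Proof. induction n; simpl; [lra|]. rewrite IHn. lra. Qed.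

Lemma sum_cos_sin N : (3 <= N)%nat ->
  sumN (fun k => cos (2 * (INR k * (2 * PI / INR N)))) N = 0 /\
  sumN (fun k => sin (2 * (INR k * (2 * PI / INR N)))) N = 0.
Proof.
  intros HN. set (th := 2 * PI / INR N).
  assert (HN0 : 3 <= INR N) by (replace 3 with (INR 3) by (simpl; ring); apply le_INR; auto).
  assert (Hth0 : 0 < th) by (unfold th; apply Rdiv_lt_0_compat; [pose proof PI_RGT_0; lra|lra]).
  assert (Hthp : th < PI).
  { unfold th. apply Rmult_lt_reg_r with (INR N); [lra|]. unfold Rdiv. rewrite Rmult_assoc, Rinv_l by lra.
    pose proof PI_RGT_0. nra. }
  assert (Hs : 0 < sin th) by (apply sin_gt_0; auto).
  assert (Hend : 2 * (INR N * th) - th = - th + 2 * INR 2 * PI).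
  { unfold th. replace (INR 2) with 2 by (simpl; ring). field. lra. }
  split.
  - assert (Ht := telescope (fun k => sin (2 * (INR k * th) - th)) N).
    rewrite (sumN_ext _ (fun k => 2 * sin th * cos (2 * (INR k * th)))) in Ht.
    2:{ intros k _. cbv beta. rewrite S_INR.
        replace (2 * ((INR k + 1) * th) - th) with (2 * (INR k * th) + th) by ring.
        rewrite sin_plus, sin_minus. ring. }
    rewrite sumN_scal in Ht. change (INR 0) with 0 in Ht. rewrite Hend, sin_period in Ht.
    replace (2 * (0 * th) - th) with (- th) in Ht by ring.
    assert (2 * sin th <> 0) by lra.
    apply Rmult_eq_reg_l with (2 * sin th); auto. rewrite Ht. ring.
  - assert (Ht := telescope (fun k => cos (2 * (INR k * th) - th)) N).
    rewrite (sumN_ext _ (fun k => - (2 * sin th) * sin (2 * (INR k * th)))) in Ht.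
    2:{ intros k _. cbv beta. rewrite S_INR.
        replace (2 * ((INR k + 1) * th) - th) with (2 * (INR k * th) + th) by ring.
        rewrite cos_plus, cos_minus. ring. }
    rewrite sumN_scal in Ht. change (INR 0) with 0 in Ht. rewrite Hend, cos_period in Ht.
    replace (2 * (0 * th) - th) with (- th) in Ht by ring.
    assert (- (2 * sin th) <> 0) by lra.
    apply Rmult_eq_reg_l with (- (2 * sin th)); auto. rewrite Ht. ring.
Qed.

Definition qf (al be ga : R) (p : pt2) : R := al * (fst p * fst p) + 2 * be * (fst p * snd p) + ga * (snd p * snd p).

Lemma qf_rot al be ga phi x :
  qf al be ga (rot phi x) = (al + ga) / 2 * nrm2 x +
    cos (2 * phi) * ((al - ga) / 2 * (fst x * fst x - snd x * snd x) + 2 * be * (fst x * snd x)) +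
    sin (2 * phi) * (be * (fst x * fst x - snd x * snd x) + (ga - al) * (fst x * snd x)).
Proof.
  unfold qf, rot, nrm2; simpl. rewrite cos_2a, sin_2a.
  pose proof (sin2_cos2 phi) as Hsc. unfold Rsqr in Hsc.
  replace ((al + ga) / 2 * (fst x * (fst x * 1) + snd x * (snd x * 1))) with
    ((al + ga) / 2 * (fst x * fst x + snd x * snd x) * (sin phi * sin phi + cos phi * cos phi)) by (rewrite Hsc; ring).
  field.
Qed.

Lemma qf_avg al be ga N x : (3 <= N)%nat ->
  sumN (fun k => qf al be ga (rot (INR k * (2 * PI / INR N)) x)) N = INR N * ((al + ga) / 2) * nrm2 x.
Proof.
  intros HN. destruct (sum_cos_sin N HN) as [Hc Hs].
  rewrite (sumN_ext _ (fun k => (al + ga) / 2 * nrm2 x +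
    (cos (2 * (INR k * (2 * PI / INR N))) * ((al - ga) / 2 * (fst x * fst x - snd x * snd x) + 2 * be * (fst x * snd x)) +
     sin (2 * (INR k * (2 * PI / INR N))) * (be * (fst x * fst x - snd x * snd x) + (ga - al) * (fst x * snd x))))).
  2:{ intros k _. rewrite qf_rot. ring. }
  rewrite sumN_plus.
  rewrite (sumN_plus (fun k => cos (2 * (INR k * (2 * PI / INR N))) * _) (fun k => sin (2 * (INR k * (2 * PI / INR N))) * _)).
  rewrite (sumN_ext (fun k => cos _ * _) (fun k => ((al - ga) / 2 * (fst x * fst x - snd x * snd x) + 2 * be * (fst x * snd x)) * cos (2 * (INR k * (2 * PI / INR N))))) by (intros; ring).
  rewrite (sumN_ext (fun k => sin _ * _) (fun k => (be * (fst x * fst x - snd x * snd x) + (ga - al) * (fst x * snd x)) * sin (2 * (INR k * (2 * PI / INR N))))) by (intros; ring).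
  rewrite !sumN_scal, Hc, Hs.
  assert (forall c n, sumN (fun _ => c) n = INR n * c).
  { intros c n; induction n; simpl; [ring|]. rewrite IHn. destruct n; simpl; ring. }
  rewrite H. ring.
Qed.

Lemma qf_LipB R0 al be ga : 0 <= R0 -> exists K U, LipB R0 K U (qf al be ga).
Proof.
  intros HR. pose proof (LipB_fst R0 HR) as F. pose proof (LipB_snd R0 HR) as S.
  pose proof (LipB_mul _ _ _ _ _ _ _ F F) as FF. pose proof (LipB_mul _ _ _ _ _ _ _ F S) as FS.
  pose proof (LipB_mul _ _ _ _ _ _ _ S S) as SS.
  pose proof (LipB_scal _ _ _ _ al FF) as A1. pose proof (LipB_scal _ _ _ _ (2 * be) FS) as A2.
  pose proof (LipB_scal _ _ _ _ ga SS) as A3.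
  pose proof (LipB_add _ _ _ _ _ _ _ A1 A2) as A12. pose proof (LipB_add _ _ _ _ _ _ _ A12 A3) as A.
  eexists; eexists. unfold qf. exact A.
Qed.

Lemma beta_lip b1 b2 : LipR (Rabs b1 + Rabs b2) (fun s => if Rle_dec 0 s then b1 * s else b2 * s).
Proof.
  intros x y. pose proof (Rabs_pos b1). pose proof (Rabs_pos b2). pose proof (Rabs_pos (x - y)).
  destruct (Rle_dec 0 x), (Rle_dec 0 y).
  - rewrite <- Rmult_minus_distr_l, Rabs_mult. nra.
  - eapply Rle_trans; [apply Rabs_triang|]. rewrite Rabs_Ropp, !Rabs_mult.
    assert (Rabs x <= Rabs (x - y)) by (rewrite !Rabs_right by lra; lra).
    assert (Rabs y <= Rabs (x - y)) by (rewrite Rabs_left by lra; rewrite Rabs_right by lra; lra).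
    nra.
  - eapply Rle_trans; [apply Rabs_triang|]. rewrite Rabs_Ropp, !Rabs_mult.
    assert (Rabs x <= Rabs (x - y)) by (rewrite Rabs_left by lra; rewrite Rabs_left by lra; lra).
    assert (Rabs y <= Rabs (x - y)) by (rewrite Rabs_right by lra; rewrite Rabs_left by lra; lra).
    nra.
  - rewrite <- Rmult_minus_distr_l, Rabs_mult. nra.
Qed.

Lemma LipB_of_LipR R0 K g : 0 <= R0 -> 0 <= K -> LipR K g -> g 0 = 0 -> LipB R0 K (K * R0) (fun p => g (snd p)).
Proof.
  intros HR HK Hg H0. split; [auto|split; [nra|split]].
  - intros x y _ _ _ _. eapply Rle_trans; [apply Hg|]. apply Rmult_le_compat_l; auto.
    pose proof (Rabs_pos (fst x - fst y)). lra.
  - intros x _ H2. specialize (Hg (snd x) 0). rewrite H0, !Rminus_0_r in Hg.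
    eapply Rle_trans; [apply Hg|]. apply Rmult_le_compat_l; auto.
Qed.

Lemma scale_sum f l c : infinite_sum f l -> infinite_sum (fun n => f n * c) (l * c).
Proof.
  intros H eps He. destruct (Req_dec c 0) as [->|Hc].
  - exists O. intros n _. rewrite sumN_f_R0. rewrite (sumN_ext _ (fun _ => 0)) by (intros; ring).
    assert (forall n, sumN (fun _ => 0) n = 0) by (induction n0; simpl; [lra|rewrite IHn0; lra]).
    rewrite H0. unfold Rdist. rewrite Rmult_0_r, Rminus_0_r, Rabs_R0. lra.
  - destruct (H (eps / Rabs c)) as [N HN]. apply Rdiv_lt_0_compat; auto. apply Rabs_pos_lt; auto.
    exists N. intros n Hn. specialize (HN n Hn). rewrite sumN_f_R0 in *. unfold Rdist in *.
    rewrite (sumN_ext _ (fun k => c * f k)) by (intros; ring). rewrite sumN_scal.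
    replace (c * sumN f (S n) - l * c) with (c * (sumN f (S n) - l)) by ring.
    rewrite Rabs_mult. apply Rmult_lt_reg_r with (/ Rabs c). apply Rinv_0_lt_compat, Rabs_pos_lt; auto.
    replace (Rabs c * Rabs (sumN f (S n) - l) * / Rabs c) with (Rabs (sumN f (S n) - l)) by (field; apply Rabs_no_R0; auto).
    auto.
Qed.

Lemma infinite_sum_ext f g l : (forall n, f n = g n) -> infinite_sum f l -> infinite_sum g l.
Proof. intros H; rewrite (functional_extensionality f g H); auto. Qed.

Lemma moment_area_bound R0 D : 0 <= R0 -> Sq R0 D -> fin2 D ->
  fin3 (Sub D nrm2) /\ W D nrm2 <= (2 * R0 * R0 + 1) * mu2 D.
Proof.
  intros HR HD HF. set (C := 2 * R0 * R0 + 1).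
  assert (HC : 0 < C) by (unfold C; nra).
  assert (Hb : forall s, cs in_box2 vol_box2 D s -> fin3 (Sub D nrm2) /\ W D nrm2 <= s * C).
  { intros s [c [Hc Hs]]. unfold W.
    assert (Hs' : infinite_sum (fun n => vol_box3 ((fst (c n), snd (c n)), (0, C))) (s * C)).
    { apply (infinite_sum_ext (fun n => vol_box2 (c n) * C)); [|apply scale_sum; auto].
      intros n. unfold vol_box2, vol_box3; simpl. rewrite (rmax0 (C - 0)) by lra. ring. }
    destruct (cover_bound in_box3 vol_box3 vol3_nn (Sub D nrm2) (fun n => ((fst (c n), snd (c n)), (0, C))) (s * C)) as [H1 H2].
    - intros [[x y] t] [Ep Ht]. destruct (Hc (x, y) Ep) as [n Hn]. exists n. simpl in *.
      unfold in_box2 in Hn. destruct (HD _ Ep) as [Hx Hy]. simpl in Hx, Hy.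
      apply abs_le_inv in Hx; apply abs_le_inv in Hy. unfold nrm2 in Ht; simpl in Ht.
      assert (x * x <= R0 * R0) by nra. assert (y * y <= R0 * R0) by nra.
      simpl in Hn. rewrite !Rmult_1_r in Ht. repeat split; try lra. unfold C. nra.
    - intros n. apply (lim_ge_partial _ _ n); [intros; apply vol3_nn|auto].
    - split; auto. }
  destruct HF as [s0 Hs0]. destruct (Hb s0 Hs0) as [Hf _]. split; auto.
  assert (W D nrm2 / C <= mu2 D).
  { unfold mu2. apply (mu_ge in_box2 vol_box2 vol2_nn); [exact (ex_intro _ s0 Hs0)|]. intros s Hs.
    destruct (Hb s Hs) as [_ H]. apply Rmult_le_reg_r with C; auto. unfold Rdiv.
    rewrite Rmult_assoc, Rinv_l by lra. lra. }
  fold C. replace (W D nrm2) with (C * (W D nrm2 / C)) by (field; lra).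
  apply Rmult_le_compat_l; lra.
Qed.

Lemma moment_pos D : (exists p, D p) -> is_open2 D -> fin3 (Sub D nrm2) -> 0 < W D nrm2.
Proof.
  intros [p0 Hp0] Ho HF. destruct (Ho p0 Hp0) as [eps [He Heps]].
  set (r := eps / 4). assert (Hr : 0 < r) by (unfold r; lra).
  set (s := if Rle_dec 0 (fst p0) then 2 * r else - (2 * r)).
  set (x0 := fst p0 + s).
  assert (Hx0 : forall x, x0 - r / 2 <= x <= x0 + r / 2 -> 3 / 2 * r <= Rabs x /\ Rabs (x - fst p0) <= 5 / 2 * r).
  { intros x Hx. unfold x0, s in Hx. destruct (Rle_dec 0 (fst p0)).
    - split; [rewrite Rabs_right by lra; lra|apply abs_le; lra].
    - split; [rewrite Rabs_left by lra; lra|apply abs_le; lra]. }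
  assert (H : r * r * (r * r / 4 - r * r / 8) <= W D nrm2).
  { replace (r * r * (r * r / 4 - r * r / 8)) with ((x0 + r / 2 - (x0 - r / 2)) * (snd p0 + r / 2 - (snd p0 - r / 2)) * (r * r / 4 - r * r / 8)) by field.
    apply mu3_lb; [lra|lra|nra| |exact HF].
    intros x y z Hx Hy Hz. destruct (Hx0 x Hx) as [Ha Hb]. unfold Sub; simpl. split.
    - apply Heps. cbn [fst snd]. apply abs_le_inv in Hb.
      assert ((x - fst p0) ^ 2 <= (5 / 2 * r) ^ 2) by (simpl; nra).
      assert ((y - snd p0) ^ 2 <= (r / 2) ^ 2) by (simpl; nra).
      assert (H3 : eps ^ 2 = 16 * r ^ 2) by (unfold r; field).
      assert (0 < r ^ 2) by (apply pow_lt; auto).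
      assert ((5/2*r)^2 = 25/4 * r^2) by field. assert ((r/2)^2 = 1/4 * r^2) by field.
      rewrite H3. lra.
    - unfold nrm2; simpl. split; [nra|].
      assert (x * x >= 9 / 4 * (r * r)).
      { assert (Rabs x * Rabs x >= 3/2 * r * (3/2 * r)) by nra. rewrite <- Rabs_mult in H.
        rewrite Rabs_right in H by nra. nra. }
      nra. }
  assert (0 < r * r * (r * r / 4 - r * r / 8)).
  { assert (0 < r * r) by nra. nra. }
  lra.
Qed.

Lemma shape (Tp Tm : mat2) :
  mdet Tp <> 0 ->
  (forall x, mapply Tp (x, 0) = mapply Tm (x, 0)) ->
  (forall q, 0 < snd q <-> exists p, 0 < snd p /\ mapply Tp p = q) ->
  (forall q, snd q < 0 <-> exists p, snd p < 0 /\ mapply Tm p = q) ->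
  mdet Tp = mdet Tm ->
  exists a b1 b2 d, Tp = (a, b1, 0, d) /\ Tm = (a, b2, 0, d) /\ a <> 0 /\ 0 < d.
Proof.
  destruct Tp as [[[a b1] c1] d1]. destruct Tm as [[[a2 b2] c2] d2].
  intros Hdp Hax HTp HTm Hdet. unfold mdet, mapply in *; simpl in *.
  assert (Hp : forall x, 0 < c1 * x + d1 * 1).
  { intros x. apply (proj2 (HTp (a * x + b1 * 1, c1 * x + d1 * 1))). exists (x, 1). simpl. split; [lra|auto]. }
  assert (Hm : forall x, c2 * x + d2 * (-1) < 0).
  { intros x. apply (proj2 (HTm (a2 * x + b2 * (-1), c2 * x + d2 * (-1)))). exists (x, -1). simpl. split; [lra|auto]. }
  assert (Hd1 : 0 < d1) by (specialize (Hp 0); lra).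
  assert (Hd2 : 0 < d2) by (specialize (Hm 0); lra).
  assert (Hc1 : c1 = 0).
  { destruct (Req_dec c1 0) as [|Hc]; auto. specialize (Hp (- (d1 + 1) / c1)).
    replace (c1 * (- (d1 + 1) / c1) + d1 * 1) with (-1) in Hp by (field; auto). lra. }
  assert (Hc2 : c2 = 0).
  { destruct (Req_dec c2 0) as [|Hc]; auto. specialize (Hm ((d2 + 1) / c2)).
    replace (c2 * ((d2 + 1) / c2) + d2 * (-1)) with 1 in Hm by (field; auto). lra. }
  subst c1 c2.
  specialize (Hax 1). inversion Hax as [[Ha Hc]]. assert (a = a2) by lra. subst a2.
  assert (Ha0 : a <> 0) by (intros ->; apply Hdp; ring).
  assert (d1 = d2). { apply Rmult_eq_reg_l with a; auto. lra. }
  subst d2. exists a, b1, b2, d1. repeat split; auto.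
Qed.

Lemma fin_LipB R0 K U D f : 0 <= R0 -> Sq R0 D -> LipB R0 K U f -> fin3 (Sub D f).
Proof.
  intros HR HD [HK [HU [_ Hb]]]. apply (sub_bound R0 D f U); auto.
  intros p Dp. destruct (HD p Dp). specialize (Hb p H H0). apply abs_le_inv in Hb. lra.
Qed.

Lemma rot_iter D th : (forall p, D p <-> D (rot th p)) -> forall k p, D p <-> D (rot (INR k * th) p).
Proof.
  intros H k. induction k; intros p.
  - simpl. rewrite Rmult_0_l, rot_0. tauto.
  - rewrite S_INR. replace ((INR k + 1) * th) with (th + INR k * th) by ring. rewrite <- rot_comp.
    rewrite (IHk p). apply H.
Qed.

Lemma mom_W X : moment0 X = W X nrm2.
Proof.
  unfold moment0, W, mu3. change (volume3 (subgraph_nrm2 X)) with (mu in_box3 vol_box3 (subgraph_nrm2 X)).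
  apply mu_ext. intros [[x y] t]. unfold Sub; simpl. tauto.
Qed.

Theorem mainTheorem12 (D : region) (N : nat) (Tp Tm : mat2) :
  is_domain D -> is_bounded2 D ->
  Nat.Even N -> (4 <= N)%nat ->
  (forall p, D p <-> D (rot (2 * PI / INR N) p)) ->
  mdet Tp <> 0 -> mdet Tm <> 0 ->
  (forall x, mapply Tp (x, 0) = mapply Tm (x, 0)) ->
  (forall q, 0 < snd q <-> exists p, 0 < snd p /\ mapply Tp p = q) ->
  (forall q, snd q < 0 <-> exists p, snd p < 0 /\ mapply Tm p = q) ->
  mdet Tp = mdet Tm ->
  / 4 * (hs2 (minv Tp) + hs2 (minv Tm)) =
    (moment0 (image (pw_map Tp Tm) D) / area (image (pw_map Tp Tm) D) ^ 3)
    / (moment0 D / area D ^ 3).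
Proof.
  intros [Hne [Hopen _]] [R0 HR0] [m Hm] HN4 Hrot Hdp Hdm Hax HTp HTm Hdet.
  destruct (shape Tp Tm Hdp Hax HTp HTm Hdet) as [a [b1 [b2 [d [ETp [ETm [Ha Hd]]]]]]].
  assert (HSq : Sq R0 D) by (intros p Dp; apply HR0; auto).
  assert (HR : 0 <= R0) by (destruct Hne as [p Dp]; destruct (HR0 p Dp) as [H _]; pose proof (Rabs_pos (fst p)); lra).
  set (th := 2 * PI / INR N).
  assert (HN0 : 4 <= INR N) by (replace 4 with (INR 4) by (simpl; ring); apply le_INR; auto).
  assert (Hth0 : 0 < th) by (unfold th; apply Rdiv_lt_0_compat; [pose proof PI_RGT_0; lra|lra]).
  assert (Hthp : th < PI).
  { unfold th. apply Rmult_lt_reg_r with (INR N); [lra|]. unfold Rdiv. rewrite Rmult_assoc, Rinv_l by lra.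
    pose proof PI_RGT_0. nra. }
  assert (Hsin : sin th <> 0) by (pose proof (sin_gt_0 th Hth0 Hthp); lra).
  assert (Hneg : forall p, D p <-> D (- fst p, - snd p)).
  { intros p. rewrite (rot_iter D th Hrot m p).
    replace (INR m * th) with PI. { rewrite rot_PI. tauto. }
    unfold th. rewrite Hm. rewrite mult_INR. replace (INR 2) with 2 by (simpl; ring).
    assert (0 < INR m) by (apply lt_0_INR; lia). field. lra. }
  subst Tp Tm.
  set (be := fun s => if Rle_dec 0 s then b1 * s else b2 * s).
  set (g := fun s => be s / a).
  assert (Hpw : forall p, pw_map (a, b1, 0, d) (a, b2, 0, d) p = (a * fst p + be (snd p), d * snd p)).
  { intros p. unfold pw_map, be, mapply. destruct (Rle_dec 0 (snd p)); f_equal; ring. }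
  assert (Hg : LipR ((Rabs b1 + Rabs b2) / Rabs a) g).
  { intros x y. unfold g. replace (be x / a - be y / a) with ((be x - be y) / a) by (field; auto).
    unfold Rdiv. rewrite Rabs_mult, Rabs_inv. pose proof (beta_lip b1 b2 x y). fold be in H.
    assert (0 < / Rabs a) by (apply Rinv_0_lt_compat, Rabs_pos_lt; auto). nra. }
  assert (HgK : 0 <= (Rabs b1 + Rabs b2) / Rabs a).
  { apply Rmult_le_pos; [pose proof (Rabs_pos b1); pose proof (Rabs_pos b2); lra|].
    left; apply Rinv_0_lt_compat, Rabs_pos_lt; auto. }
  assert (HF2 : fin2 D).
  { destruct (box_cover in_box2 vol_box2 vol2_nn e02 vol2_e0 D ((- R0 - 1, R0 + 1), (- R0 - 1, R0 + 1))) as [H _]; auto.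
    intros p Dp. destruct (HSq p Dp) as [H1 H2]. apply abs_le_inv in H1; apply abs_le_inv in H2.
    unfold in_box2; simpl. lra. }
  assert (Harea : area (image (pw_map (a, b1, 0, d) (a, b2, 0, d)) D) = Rabs a * Rabs d * area D).
  { change (area (image (pw_map (a, b1, 0, d) (a, b2, 0, d)) D)) with (mu2 (img (pw_map (a, b1, 0, d) (a, b2, 0, d)) D)).
    change (area D) with (mu2 D).
    assert (E : img (pw_map (a, b1, 0, d) (a, b2, 0, d)) D = img (sc2 a d) (img (shx g) D)).
    { rewrite img_comp. apply img_ext. intros p _. rewrite Hpw. unfold sc2, shx, g; simpl. f_equal. field; auto. }
    rewrite E. destruct (shx_eq g _ D HgK Hg HF2) as [F1 E1].
    destruct (sc2_eq a d _ Ha ltac:(lra) F1) as [F2 E2]. rewrite E2, E1. ring. }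
  set (u := fun p : pt2 => a * fst p + be (snd p)). set (v := fun p : pt2 => d * snd p).
  set (pf := fun p => u p * u p + v p * v p).
  assert (Lpf : exists K U, LipB R0 K U pf).
  { pose proof (LipB_scal _ _ _ _ a (LipB_fst R0 HR)) as A1.
    pose proof (LipB_of_LipR R0 (Rabs b1 + Rabs b2) be HR ltac:(pose proof (Rabs_pos b1); pose proof (Rabs_pos b2); lra) (beta_lip b1 b2)
       ltac:(unfold be; destruct (Rle_dec 0 0); ring)) as A2.
    pose proof (LipB_add _ _ _ _ _ _ _ A1 A2) as Au.
    pose proof (LipB_scal _ _ _ _ d (LipB_snd R0 HR)) as Av.
    pose proof (LipB_add _ _ _ _ _ _ _ (LipB_mul _ _ _ _ _ _ _ Au Au) (LipB_mul _ _ _ _ _ _ _ Av Av)) as A.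
    eexists; eexists. exact A. }
  destruct Lpf as [Kp [Up Lpf]].
  assert (Fpf : fin3 (Sub D pf)) by (apply (fin_LipB R0 Kp Up); auto).
  assert (Hmom : moment0 (image (pw_map (a, b1, 0, d) (a, b2, 0, d)) D) = Rabs a * Rabs d * W D pf).
  { rewrite mom_W. unfold W.
    assert (E1 : Sub (image (pw_map (a, b1, 0, d) (a, b2, 0, d)) D) nrm2 =
      img (fun q : pt3 => (pw_map (a, b1, 0, d) (a, b2, 0, d) (fst q), snd q)) (Sub D pf)).
    { apply pred_ext. intros [y t]. unfold Sub, img, image; simpl. split.
      - intros [[x [Dx Ex]] Ht]. exists (x, t). simpl. split; [split; [auto|]|rewrite Ex; auto].
        rewrite <- Ex in Ht. rewrite Hpw in Ht. unfold pf, u, v. unfold nrm2 in Ht. simpl in Ht.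
        rewrite !Rmult_1_r in Ht. lra.
      - intros [[x t'] [[Dx Ht] Eq]]. simpl in *. inversion Eq; subst. split; [exists x; auto|].
        rewrite Hpw. unfold nrm2; simpl. rewrite !Rmult_1_r. unfold pf, u, v in Ht. lra. }
    rewrite E1.
    assert (E2 : img (fun q : pt3 => (pw_map (a, b1, 0, d) (a, b2, 0, d) (fst q), snd q)) (Sub D pf) =
      img (sc a d 1) (img (sh1 g) (Sub D pf))).
    { rewrite img_comp. apply img_ext. intros [[x y] t] _. rewrite Hpw. unfold sc, sh1, g; simpl.
      f_equal; [f_equal; field; auto|ring]. }
    rewrite E2. destruct (sh1_eq g _ _ HgK Hg Fpf) as [F1 M1].
    destruct (sc_eq a d 1 _ Ha ltac:(lra) ltac:(lra) F1) as [F2 M2]. unfold mu3 in *. rewrite M2, M1.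
    rewrite Rabs_R1. ring. }
  assert (Lneg : LipB R0 Kp Up (fun x => pf (- fst x, - snd x))) by (apply LipB_neg; auto).
  assert (Hnegpf : W D (fun x => pf (- fst x, - snd x)) = W D pf).
  { apply (W_inv D pf (fun x => (- fst x, - snd x)) (fun x => (- fst x, - snd x))).
    - exact Hneg.
    - intros [y1 y2]; simpl; f_equal; ring.
    - intros Y HY. exact (neg_mu Y HY).
    - apply (fin_LipB R0 Kp Up); auto. }
  assert (Hpfnn : forall x, 0 <= pf x) by (intros x; unfold pf; nra).
  assert (Hadd : W D (fun x => pf x + pf (- fst x, - snd x)) = W D pf + W D (fun x => pf (- fst x, - snd x))).
  { destruct Lpf as [HK1 [_ [L1 _]]]. destruct Lneg as [_ [_ [L2 _]]].
    apply (W_add R0 Kp); auto. }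
  set (al := 2 * (a * a)). set (bet := a * (b1 + b2)). set (ga := b1 * b1 + b2 * b2 + 2 * (d * d)).
  assert (HQ : forall x, pf x + pf (- fst x, - snd x) = qf al bet ga x).
  { intros [x1 x2]. unfold pf, u, v, be, qf, al, bet, ga; simpl.
    destruct (Rle_dec 0 x2), (Rle_dec 0 (- x2)).
    - assert (x2 = 0) by lra. subst x2. ring.
    - ring. - ring. - lra. }
  assert (H2pf : 2 * W D pf = W D (qf al bet ga)).
  { rewrite (W_ext D (qf al bet ga) (fun x => pf x + pf (- fst x, - snd x))) by (intros; symmetry; apply HQ).
    rewrite Hadd, Hnegpf. ring. }
  assert (HQnn : forall y, 0 <= qf al bet ga y).
  { intros y. replace (qf al bet ga y) with ((a * fst y + b1 * snd y) * (a * fst y + b1 * snd y) + (d * snd y) * (d * snd y) +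
      ((a * fst y + b2 * snd y) * (a * fst y + b2 * snd y) + (d * snd y) * (d * snd y))) by (unfold qf, al, bet, ga; ring).
    repeat apply Rplus_le_le_0_compat; apply Rle_0_sqr. }
  destruct (qf_LipB (2 * R0) al bet ga ltac:(lra)) as [KQ [UQ LQ]].
  set (F := fun k x => qf al bet ga (rot (INR k * th) x)).
  assert (LF : forall k, LipB R0 (2 * KQ) UQ (F k)) by (intros k; unfold F; apply LipB_rot; auto).
  assert (HFk : forall k, W D (F k) = W D (qf al bet ga)).
  { induction k.
    - apply W_ext. intros x _. unfold F. simpl INR. rewrite Rmult_0_l, rot_0. auto.
    - rewrite <- IHk. rewrite (W_ext D (F (S k)) (fun x => F k (rot th x))).
      + apply (W_inv D (F k) (rot th) (rot (- th))).
        * exact Hrot.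
        * intros y. rewrite rot_comp. replace (th + - th) with 0 by ring. apply rot_0.
        * intros Y HY. apply rot_mu; auto.
        * rewrite <- (pred_ext (Sub D (F (S k)))).
          { apply (fin_LipB R0 (2 * KQ) UQ); auto. }
          intros [x t]. unfold Sub, F; cbn [fst snd]. rewrite rot_comp, S_INR.
          replace (INR k * th + th) with ((INR k + 1) * th) by ring. tauto.
      + intros x _. unfold F. rewrite rot_comp, S_INR. f_equal. f_equal. ring. }
  destruct (moment_area_bound R0 D HR HSq HF2) as [FM HMA].
  assert (Havg : INR N * W D (qf al bet ga) = INR N * ((al + ga) / 2) * W D nrm2).
  { destruct LQ as [HKQ [HUQ _]].
    rewrite <- (W_scale D nrm2 (INR N * ((al + ga) / 2))); auto.
    2:{ apply Rmult_lt_0_compat; [lra|]. unfold al, ga. assert (0 < a * a) by nra. nra. }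
    rewrite (W_ext D (fun x => INR N * ((al + ga) / 2) * nrm2 x) (fun x => sumN (fun k => F k x) N)).
    2:{ intros x _. unfold F. symmetry. apply qf_avg. lia. }
    rewrite (W_sum R0 (2 * KQ) UQ D F N); auto; try lra.
    2:{ intros k x _. apply HQnn. }
    rewrite (sumN_ext _ (fun _ => W D (qf al bet ga))) by (intros; apply HFk).
    assert (forall c n, sumN (fun _ => c) n = INR n * c).
    { intros c n; induction n; simpl; [ring|]. rewrite IHn. destruct n; simpl; ring. }
    symmetry; apply H. }
  assert (HWQ : W D (qf al bet ga) = (al + ga) / 2 * W D nrm2).
  { apply Rmult_eq_reg_l with (INR N); [|lra]. rewrite Havg. ring. }
  assert (HMpos : 0 < W D nrm2) by (apply moment_pos; auto).
  assert (HApos : 0 < area D).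
  { change (area D) with (mu2 D). assert (0 < 2 * R0 * R0 + 1) by nra.
    destruct (Rle_dec (mu2 D) 0); [|lra]. assert ((2 * R0 * R0 + 1) * mu2 D <= 0) by nra. lra. }
  rewrite Hmom, Harea, mom_W.
  assert (HWpf : W D pf = (al + ga) / 4 * W D nrm2) by (rewrite HWQ in H2pf; lra).
  rewrite HWpf. set (M := W D nrm2) in *. set (A := area D) in *.
  unfold hs2, minv, mdet, al, ga. simpl.
  rewrite (Rabs_right d) by lra.
  destruct (Rle_dec 0 a).
  - rewrite (Rabs_right a) by lra. field. repeat split; lra.
  - rewrite (Rabs_left a) by lra. field. repeat split; lra.
Qed.
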